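(* If a sequent $\Gamma\vdash M$ is derivable in system $\mathcal S$, then it has a normal derivation in $\mathcal S$.
   Context: Fix countably infinite sets of names and variables and the constructors $\mathsf{pub}$ (unary) and $\mathsf{sign},\mathsf{blind},\langle\cdot,\cdot\rangle,\{\cdot\}_{\cdot}$ (binary). Let $E$ be an equational theory whose signature $\Sigma_E$ is disjoint from the constructors, containing at most one associative-commutative (AC) binary symbol $\oplus$, presented by a rewrite system $R_E$ terminating and confluent modulo AC of $\oplus$. Terms: names, variables, $\mathsf{pub}(M)$, $\mathsf{sign}(M,N)$, $\mathsf{blind}(M,N)$, $\langle M,N\rangle$, $\{M\}_N$, $g(M_1,\dots,M_j)$ with $g\in\Sigma_E$; all ground. $\equiv$ is equality modulo AC, $\approx_E$ equality modulo $E$. A term is guarded if it is a name, a variable, or headed by a constructor. An $E$-context is a term with holes built only from symbols of $\Sigma_E$. Sequents $\Gamma\vdash M$ ($\Gamma$ a finite set of terms) have all terms in $R_E$-normal form modulo AC; $\Gamma,M$ means $\Gamma\cup\{M\}$. System $\mathcal S$: (id) $\Gamma\vdash M$ with no premise if $M\approx_E C[M_1,\dots,M_k]$ for an $E$-context $C$ and $M_i\in\Gamma$; (cut) from $\Gamma\vdash M$, $\Gamma,M\vdash T$ infer $\Gamma\vdash T$; ($p_L$) from $\Gamma,\langle M,N\rangle,M,N\vdash T$ infer $\Gamma,\langle M,N\rangle\vdash T$; ($p_R$) from $\Gamma\vdash M$, $\Gamma\vdash N$ infer $\Gamma\vdash\langle M,N\rangle$; ($e_L$) from $\Gamma,\{M\}_K\vdash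 K$ and $\Gamma,\{M\}_K,M,K\vdash N$ infer $\Gamma,\{M\}_K\vdash N$; ($e_R$) from $\Gamma\vdash M$, $\Gamma\vdash K$ infer $\Gamma\vdash\{M\}_K$; ($\mathsf{sign}_L$) from $\Gamma,\mathsf{sign}(M,K),\mathsf{pub}(L),M\vdash N$ infer $\Gamma,\mathsf{sign}(M,K),\mathsf{pub}(L)\vdash N$ provided $K\equiv L$; ($\mathsf{sign}_R$) from $\Gamma\vdash M$, $\Gamma\vdash K$ infer $\Gamma\vdash\mathsf{sign}(M,K)$; ($\mathsf{blind}_{L1}$) from $\Gamma,\mathsf{blind}(M,K)\vdash K$ and $\Gamma,\mathsf{blind}(M,K),M,K\vdash N$ infer $\Gamma,\mathsf{blind}(M,K)\vdash N$; ($\mathsf{blind}_R$) from $\Gamma\vdash M$, $\Gamma\vdash K$ infer $\Gamma\vdash\mathsf{blind}(M,K)$; ($\mathsf{blind}_{L2}$) from $\Gamma,\mathsf{sign}(\mathsf{blind}(M,R),K)\vdash R$ and $\Gamma,\mathsf{sign}(\mathsf{blind}(M,R),K),\mathsf{sign}(M,K),R\vdash N$ infer $\Gamma,\mathsf{sign}(\mathsf{blind}(M,R),K)\vdash N$; ($gs$) from $\Gamma\vdash A$, $\Gamma,A\vdash M$ infer $\Gamma\vdash M$, provided $A$ is a guarded subterm of a term in $\Gamma\cup\{M\}$. Left rules: $p_L,e_L,\mathsf{sign}_L,\mathsf{blind}_{L1},\mathsf{blind}_{L2},gs$; right rules: $p_R,e_R,\mathsf{sign}_R,\mathsf{blind}_R$.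 Branching left rules are the left rules other than $p_L$ and $\mathsf{sign}_L$. A normal derivation is a cut-free derivation such that (1) no left rule appears above a right rule, and (2) no left rule appears immediately above the left premise of a branching left rule (i.e., the derivation of the left premise of a branching left rule does not end with a left rule). *)

(* Defs.v *)
From Stdlib Require Import List Relations.
Import ListNotations.
Set Implicit Arguments.

Section Sequents.

(* ---- Signature Sigma_E of the equational theory: an arbitrary type of
   function symbols, disjoint from the constructors by construction. *)
Variable S : Type.

Inductive term : Type :=
| Name  : nat -> term
| Var   : nat -> term
| Pub   : term -> term
| Sign  : term -> term -> term
| Blind : term -> term -> term
| Pair  : term -> term -> term
| Enc   : term -> term -> term              (* {M}_K = Enc M K *)
| Fn    : S -> list term -> term.

Inductive pat : Type :=
| PV : nat -> pat
| PF : S -> list pat -> pat.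

Fixpoint inst (s : nat -> term) (p : pat) : term :=
  match p with
  | PV n => s n
  | PF g ps => Fn g (map (inst s) ps)
  end.

Inductive pvar_in (n : nat) : pat -> Prop :=
| pvi_var : pvar_in n (PV n)
| pvi_fn g ps p : In p ps -> pvar_in n p -> pvar_in n (PF g ps).

(* The equational theory E: arities, the (at most one) AC symbol, and the
   rewrite system R_E. *)
Record eqtheory : Type := EqTheory {
  arity : S -> nat;
  oplus : option S;
  rules : list (pat * pat)
}.

Variable th : eqtheory.

Inductive wf : term -> Prop :=
| wf_name n : wf (Name n)
| wf_var n : wf (Var n)
| wf_pub t : wf t -> wf (Pub t)
| wf_sign t u : wf t -> wf u -> wf (Sign t u)
| wf_blind t u : wf t -> wf u -> wf (Blind t u)
| wf_pair t u : wf t -> wf u -> wf (Pair t u)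
| wf_enc t u : wf t -> wf u -> wf (Enc t u)
| wf_fn g l : length l = arity th g -> Forall wf l -> wf (Fn g l).

Inductive wf_pat : pat -> Prop :=
| wfp_var n : wf_pat (PV n)
| wfp_fn g ps : length ps = arity th g -> Forall wf_pat ps -> wf_pat (PF g ps).

Inductive ctx_step (R : term -> term -> Prop) : term -> term -> Prop :=
| cs_root t u : R t u -> ctx_step R t u
| cs_pub t u : ctx_step R t u -> ctx_step R (Pub t) (Pub u)
| cs_sign1 t u v : ctx_step R t u -> ctx_step R (Sign t v) (Sign u v)
| cs_sign2 t u v : ctx_step R t u -> ctx_step R (Sign v t) (Sign v u)
| cs_blind1 t u v : ctx_step R t u -> ctx_step R (Blind t v) (Blind u v)
| cs_blind2 t u v : ctx_step R t u -> ctx_step R (Blind v t) (Blind v u)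
| cs_pair1 t u v : ctx_step R t u -> ctx_step R (Pair t v) (Pair u v)
| cs_pair2 t u v : ctx_step R t u -> ctx_step R (Pair v t) (Pair v u)
| cs_enc1 t u v : ctx_step R t u -> ctx_step R (Enc t v) (Enc u v)
| cs_enc2 t u v : ctx_step R t u -> ctx_step R (Enc v t) (Enc v u)
| cs_fn g l1 l2 t u :
    ctx_step R t u -> ctx_step R (Fn g (l1 ++ t :: l2)) (Fn g (l1 ++ u :: l2)).

Definition ac_root (t u : term) : Prop :=
  exists o, oplus th = Some o /\
   ((exists x y, t = Fn o [x; y] /\ u = Fn o [y; x]) \/
    (exists x y z, t = Fn o [Fn o [x; y]; z] /\ u = Fn o [x; Fn o [y; z]])).

Definition rule_root (t u : term) : Prop :=
  exists l r (s : nat -> term), In (l, r) (rules th) /\ t = inst s l /\ u = inst s r.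

Definition ac_eq : term -> term -> Prop := clos_refl_sym_trans term (ctx_step ac_root).

Definition e_eq : term -> term -> Prop :=
  clos_refl_sym_trans term (ctx_step (fun t u => ac_root t u \/ rule_root t u)).

Definition rew (t u : term) : Prop :=
  exists t' u', ac_eq t t' /\ ctx_step rule_root t' u' /\ ac_eq u' u.

Definition rew_star : term -> term -> Prop := clos_refl_trans term rew.

Definition nf (t : term) : Prop := ~ exists u, rew t u.

Definition admissible : Prop :=
  (forall o, oplus th = Some o -> arity th o = 2) /\
  (forall l r, In (l, r) (rules th) ->
     wf_pat l /\ wf_pat r /\ (exists g ps, l = PF g ps) /\
     (forall n, pvar_in n r -> pvar_in n l)) /\
  (forall t, wf t -> Acc (fun u v => rew v u) t) /\
  (forall t u1 u2, wf t -> rew_star t u1 -> rew_star t u2 ->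
     exists v1 v2, rew_star u1 v1 /\ rew_star u2 v2 /\ ac_eq v1 v2).

(* ---- Sequents. A context Gamma is represented by a list (all side
   conditions only depend on membership, so this is set semantics;
   "Gamma, M" is M :: Gamma). *)
Definition ctx := list term.

Definition good_seq (G : ctx) (T : term) : Prop :=
  Forall (fun t => wf t /\ nf t) (T :: G).

Inductive subterm (t : term) : term -> Prop :=
| st_refl : subterm t t
| st_pub u : subterm t u -> subterm t (Pub u)
| st_sign1 u v : subterm t u -> subterm t (Sign u v)
| st_sign2 u v : subterm t v -> subterm t (Sign u v)
| st_blind1 u v : subterm t u -> subterm t (Blind u v)
| st_blind2 u v : subterm t v -> subterm t (Blind u v)
| st_pair1 u v : subterm t u -> subterm t (Pair u v)
| st_pair2 u v : subterm t v -> subterm t (Pair u v)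
| st_enc1 u v : subterm t u -> subterm t (Enc u v)
| st_enc2 u v : subterm t v -> subterm t (Enc u v)
| st_fn g l u : In u l -> subterm t u -> subterm t (Fn g l).

Definition guarded (t : term) : Prop :=
  match t with Fn _ _ => False | _ => True end.

Inductive egen (G : ctx) : term -> Prop :=
| eg_hole t : In t G -> egen G t
| eg_fn g l : length l = arity th g -> Forall (egen G) l -> egen G (Fn g l).

Definition id_cond (G : ctx) (M : term) : Prop :=
  exists t, egen G t /\ e_eq M t.

Inductive rule_name : Type :=
| Rid | Rcut | RpL | RpR | ReL | ReR | RsignL | RsignR
| RblindL1 | RblindR | RblindL2 | Rgs.

Definition is_left (r : rule_name) : Prop :=
  match r with RpL | ReL | RsignL | RblindL1 | RblindL2 | Rgs => True | _ => False end.
Definition is_right (r : rule_name) : Prop :=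
  match r with RpR | ReR | RsignR | RblindR => True | _ => False end.
Definition is_branching_left (r : rule_name) : Prop :=
  match r with ReL | RblindL1 | RblindL2 | Rgs => True | _ => False end.

(* One-premise rule instances: rule, conclusion (G |- T), premise. *)
Inductive step1 : rule_name -> ctx -> term -> ctx -> term -> Prop :=
| s_pL G M N T : In (Pair M N) G -> step1 RpL G T (M :: N :: G) T
| s_signL G M K L N : In (Sign M K) G -> In (Pub L) G -> ac_eq K L ->
    step1 RsignL G N (M :: G) N.

(* Two-premise rule instances: rule, conclusion, left premise, right premise. *)
Inductive step2 : rule_name -> ctx -> term -> ctx -> term -> ctx -> term -> Prop :=
| s_cut G M T : step2 Rcut G T G M (M :: G) T
| s_pR G M N : step2 RpR G (Pair M N) G M G N
| s_eL G M K N : In (Enc M K) G -> step2 ReL G N G K (M :: K :: G) N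
| s_eR G M K : step2 ReR G (Enc M K) G M G K
| s_signR G M K : step2 RsignR G (Sign M K) G M G K
| s_blindL1 G M K N : In (Blind M K) G ->
    step2 RblindL1 G N G K (M :: K :: G) N
| s_blindR G M K : step2 RblindR G (Blind M K) G M G K
| s_blindL2 G M R K N : In (Sign (Blind M R) K) G ->
    step2 RblindL2 G N G R (Sign M K :: R :: G) N
| s_gs G A M : (exists B, In B (M :: G) /\ subterm A B) -> guarded A ->
    step2 Rgs G M G A (A :: G) M.

Inductive deriv : Type :=
| D0 : rule_name -> ctx -> term -> deriv
| D1 : rule_name -> ctx -> term -> deriv -> deriv
| D2 : rule_name -> ctx -> term -> deriv -> deriv -> deriv.

Definition concl (d : deriv) : ctx * term :=
  match d with D0 _ G T | D1 _ G T _ | D2 _ G T _ _ => (G, T) end.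
Definition root_rule (d : deriv) : rule_name :=
  match d with D0 r _ _ | D1 r _ _ _ | D2 r _ _ _ _ => r end.
Definition premises (d : deriv) : list deriv :=
  match d with D0 _ _ _ => [] | D1 _ _ _ d1 => [d1] | D2 _ _ _ d1 d2 => [d1; d2] end.

Fixpoint valid (d : deriv) : Prop :=
  match d with
  | D0 r G T => good_seq G T /\ r = Rid /\ id_cond G T
  | D1 r G T d1 => good_seq G T /\ valid d1 /\
      step1 r G T (fst (concl d1)) (snd (concl d1))
  | D2 r G T d1 d2 => good_seq G T /\ valid d1 /\ valid d2 /\
      step2 r G T (fst (concl d1)) (snd (concl d1)) (fst (concl d2)) (snd (concl d2))
  end.

Fixpoint all_nodes (P : deriv -> Prop) (d : deriv) : Prop :=
  P d /\ match d with
         | D0 _ _ _ => True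
         | D1 _ _ _ d1 => all_nodes P d1
         | D2 _ _ _ d1 d2 => all_nodes P d1 /\ all_nodes P d2
         end.

Fixpoint some_node (P : deriv -> Prop) (d : deriv) : Prop :=
  P d \/ match d with
         | D0 _ _ _ => False
         | D1 _ _ _ d1 => some_node P d1
         | D2 _ _ _ d1 d2 => some_node P d1 \/ some_node P d2
         end.

Definition cut_free (d : deriv) : Prop :=
  all_nodes (fun n => root_rule n <> Rcut) d.

Definition no_left_above_right (d : deriv) : Prop :=
  all_nodes (fun n => is_right (root_rule n) ->
    forall p, In p (premises n) -> ~ some_node (fun m => is_left (root_rule m)) p) d.

Definition left_premise_ok (d : deriv) : Prop :=
  all_nodes (fun n => is_branching_left (root_rule n) ->
    match n with
    | D2 _ _ _ d1 _ => ~ is_left (root_rule d1)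
    | _ => True
    end) d.

Definition normal (d : deriv) : Prop :=
  cut_free d /\ no_left_above_right d /\ left_premise_ok d.

Definition derivable (G : ctx) (M : term) : Prop :=
  exists d, valid d /\ concl d = (G, M).

End Sequents.

(* Main.v *)
Require Import Defs.
From Stdlib Require Import List Relations Lia PeanoNat ClassicalEpsilon.
Import ListNotations.
Set Implicit Arguments.


Section Basics.
Variable S : Type.
Variable th : eqtheory S.
Notation term := (term S).

Definition term_ind' (P : term -> Prop)
  (HN : forall n, P (Name S n)) (HV : forall n, P (Var S n))
  (HP : forall t, P t -> P (Pub t))
  (HS : forall t u, P t -> P u -> P (Sign t u))
  (HB : forall t u, P t -> P u -> P (Blind t u))
  (HPa : forall t u, P t -> P u -> P (Pair t u))
  (HE : forall t u, P t -> P u -> P (Enc t u))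
  (HF : forall g l, Forall P l -> P (Fn g l)) : forall t, P t :=
  fix F t := match t with
  | Name _ n => HN n | Var _ n => HV n | Pub a => HP a (F a)
  | Sign a b => HS a b (F a) (F b) | Blind a b => HB a b (F a) (F b)
  | Pair a b => HPa a b (F a) (F b) | Enc a b => HE a b (F a) (F b)
  | Fn g l => HF g l ((fix G (l : list term) : Forall P l :=
       match l with [] => Forall_nil _ | x :: r => Forall_cons x (F x) (G r) end) l)
  end.

Definition pat_ind' (P : pat S -> Prop)
  (HV : forall n, P (PV S n))
  (HF : forall g l, Forall P l -> P (PF g l)) : forall p, P p :=
  fix F p := match p with
  | PV _ n => HV n
  | PF g l => HF g l ((fix G (l : list (pat S)) : Forall P l :=
       match l with [] => Forall_nil _ | x :: r => Forall_cons x (F x) (G r) end) l)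
  end.

Definition stepR (t u : term) : Prop := ac_root th t u \/ rule_root th t u.
Definition estep := ctx_step stepR.
Definition acstep := ctx_step (ac_root th).

Lemma rst_map (R1 R2 : term -> term -> Prop) (f : term -> term) :
  (forall a b, R1 a b -> R2 (f a) (f b)) ->
  forall a b, clos_refl_sym_trans _ R1 a b -> clos_refl_sym_trans _ R2 (f a) (f b).
Proof.
  intros H a b Hab; induction Hab.
  - apply rst_step; auto.
  - apply rst_refl.
  - apply rst_sym; auto.
  - eapply rst_trans; eauto.
Qed.

Lemma rst_map2 (R1 R2 : term -> term -> Prop) (f : term -> term) :
  (forall a b, R1 a b -> f a = f b \/ R2 (f a) (f b)) ->
  forall a b, clos_refl_sym_trans _ R1 a b -> clos_refl_sym_trans _ R2 (f a) (f b).
Proof.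
  intros H a b Hab; induction Hab.
  - destruct (H _ _ H0) as [E|E]; [rewrite E; apply rst_refl| apply rst_step; auto].
  - apply rst_refl.
  - apply rst_sym; auto.
  - eapply rst_trans; eauto.
Qed.

Lemma ac_e a b : ac_eq th a b -> e_eq th a b.
Proof.
  unfold ac_eq, e_eq. intro H. apply (@rst_map (ctx_step (ac_root th)) estep (fun x => x)); auto.
  intros. clear H. unfold estep. induction H0; try (constructor; auto; fail).
  apply cs_root. left; auto.
Qed.

Lemma rst_sym' (R : term -> term -> Prop) a b : clos_refl_sym_trans _ R a b -> clos_refl_sym_trans _ R b a.
Proof. apply rst_sym. Qed.
Lemma rst_trans' (R : term -> term -> Prop) a b c : clos_refl_sym_trans _ R a b -> clos_refl_sym_trans _ R b c -> clos_refl_sym_trans _ R a c.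
Proof. apply rst_trans. Qed.

Section Cong.
Variable R : term -> term -> Prop.
Notation E := (clos_refl_sym_trans _ (ctx_step R)).
Lemma cong_pub a b : E a b -> E (Pub a) (Pub b).
Proof. apply rst_map. intros; apply cs_pub; auto. Qed.
Lemma cong2 (c : term -> term -> term)
  (H1 : forall a b v, ctx_step R a b -> ctx_step R (c a v) (c b v))
  (H2 : forall a b v, ctx_step R a b -> ctx_step R (c v a) (c v b)) :
  forall a b a' b', E a a' -> E b b' -> E (c a b) (c a' b').
Proof.
  intros. apply rst_trans with (c a' b).
  - apply (@rst_map (ctx_step R) (ctx_step R) (fun x => c x b)); auto.
  - apply (@rst_map (ctx_step R) (ctx_step R) (fun x => c a' x)); auto.
Qed.
Lemma cong_pair a b a' b' : E a a' -> E b b' -> E (Pair a b) (Pair a' b').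
Proof. apply cong2; intros; [apply cs_pair1|apply cs_pair2]; auto. Qed.
Lemma cong_sign a b a' b' : E a a' -> E b b' -> E (Sign a b) (Sign a' b').
Proof. apply cong2; intros; [apply cs_sign1|apply cs_sign2]; auto. Qed.
Lemma cong_blind a b a' b' : E a a' -> E b b' -> E (Blind a b) (Blind a' b').
Proof. apply cong2; intros; [apply cs_blind1|apply cs_blind2]; auto. Qed.
Lemma cong_enc a b a' b' : E a a' -> E b b' -> E (Enc a b) (Enc a' b').
Proof. apply cong2; intros; [apply cs_enc1|apply cs_enc2]; auto. Qed.
Lemma cong_fn1 g l1 l2 a b : E a b -> E (Fn g (l1 ++ a :: l2)) (Fn g (l1 ++ b :: l2)).
Proof. apply (@rst_map (ctx_step R) (ctx_step R) (fun x => Fn g (l1 ++ x :: l2))). intros; apply cs_fn; auto. Qed.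
Lemma cong_fn g l l' : Forall2 E l l' -> forall pre, E (Fn g (pre ++ l)) (Fn g (pre ++ l')).
Proof.
  induction 1; intros pre.
  - apply rst_refl.
  - apply rst_trans with (Fn g (pre ++ y :: l)).
    + apply cong_fn1; auto.
    + specialize (IHForall2 (pre ++ [y])). rewrite <- !app_assoc in IHForall2. exact IHForall2.
Qed.
End Cong.

End Basics.


Section Inv.
Variable S : Type.
Variable th : eqtheory S.
Notation term := (term S).
Variable Hlhs : forall l r, In (l, r) (rules th) -> exists g ps, l = PF g ps.

Lemma ac_root_shape (t u : term) : ac_root th t u -> (exists o l, t = Fn o l) /\ (exists o l, u = Fn o l).
Proof.
  intros (o&_&[(x&y&->&->)|(x&y&z&->&->)]); split; eauto.
Qed.

Lemma rule_root_shape (t u : term) : rule_root th t u -> exists o l, t = Fn o l.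
Proof.
  intros (l&r&s&Hin&->&->). destruct (Hlhs _ _ Hin) as (g&ps&->). simpl; eauto.
Qed.

Ltac kill := match goal with
  | H : ac_root _ _ _ |- _ => apply ac_root_shape in H; destruct H as [(?&?&?) (?&?&?)]; discriminate
  | H : rule_root _ _ _ |- _ => apply rule_root_shape in H; destruct H as (?&?&?); discriminate
  end.

Ltac acinv_tac :=
  let H := fresh in
  intro H; unfold ac_eq in *; apply clos_rst_rstn1_iff in H;
  induction H as [|? ? Hyz Hn IH];
  [ repeat eexists; try apply rst_refl
  | destruct IH as (?&?&->&?&?);
    destruct Hyz as [Hs|Hs]; inversion Hs; subst; try kill;
    repeat eexists; eauto;
    match goal with
    | H : ctx_step _ ?a ?b |- clos_refl_sym_trans _ _ ?x ?b =>
        eapply rst_trans; [eassumption| apply rst_step; exact H]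
    | H : ctx_step _ ?b ?a |- clos_refl_sym_trans _ _ ?x ?b =>
        eapply rst_trans; [eassumption| apply rst_sym; apply rst_step; exact H]
    end].

Lemma ac_inv_pair (a b t : term) : ac_eq th (Pair a b) t -> exists a' b', t = Pair a' b' /\ ac_eq th a a' /\ ac_eq th b b'.
Proof. acinv_tac. Qed.
Lemma ac_inv_sign (a b t : term) : ac_eq th (Sign a b) t -> exists a' b', t = Sign a' b' /\ ac_eq th a a' /\ ac_eq th b b'.
Proof. acinv_tac. Qed.
Lemma ac_inv_blind (a b t : term) : ac_eq th (Blind a b) t -> exists a' b', t = Blind a' b' /\ ac_eq th a a' /\ ac_eq th b b'.
Proof. acinv_tac. Qed.
Lemma ac_inv_enc (a b t : term) : ac_eq th (Enc a b) t -> exists a' b', t = Enc a' b' /\ ac_eq th a a' /\ ac_eq th b b'.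
Proof. acinv_tac. Qed.
Lemma ac_inv_pub (a t : term) : ac_eq th (Pub a) t -> exists a', t = Pub a' /\ ac_eq th a a'.
Proof.
  intro H; apply clos_rst_rstn1_iff in H.
  induction H as [|? ? Hyz Hn IH].
  - eexists; split; [reflexivity| apply rst_refl].
  - destruct IH as (?&->&?). destruct Hyz as [Hs|Hs]; inversion Hs; subst; try kill;
    eexists; split; eauto.
    + eapply rst_trans; [eassumption| apply rst_step; eassumption].
    + eapply rst_trans; [eassumption| apply rst_sym; apply rst_step; eassumption].
Qed.
Lemma ac_inv_name n (t : term) : ac_eq th (Name S n) t -> t = Name S n.
Proof.
  intro H; apply clos_rst_rstn1_iff in H.
  induction H as [|? ? Hyz Hn IH]; auto. subst. destruct Hyz as [Hs|Hs]; inversion Hs; subst; try kill.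
Qed.
Lemma ac_inv_var n (t : term) : ac_eq th (Var S n) t -> t = Var S n.
Proof.
  intro H; apply clos_rst_rstn1_iff in H.
  induction H as [|? ? Hyz Hn IH]; auto. subst. destruct Hyz as [Hs|Hs]; inversion Hs; subst; try kill.
Qed.

End Inv.


Section NF.
Variable S : Type.
Variable th : eqtheory S.
Notation term := (term S).
Variable Hlhs : forall l r, In (l, r) (rules th) -> exists g ps, l = PF g ps.

Lemma nf_ac (t u : term) : nf th t -> ac_eq th t u -> nf th u.
Proof.
  intros Hn Hac [w (u'&w'&H1&H2&H3)]. apply Hn. exists w, u', w'. repeat split; auto.
  eapply rst_trans; eauto.
Qed.

Lemma rew_ctx (f : term -> term) :
  (forall x y, ctx_step (rule_root th) x y -> ctx_step (rule_root th) (f x) (f y)) ->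
  (forall x y, ctx_step (ac_root th) x y -> ctx_step (ac_root th) (f x) (f y)) ->
  forall a b, rew th a b -> rew th (f a) (f b).
Proof.
  intros H1 H2 a b (a'&b'&Ha&Hs&Hb). exists (f a'), (f b'). repeat split; auto.
  - apply (@rst_map _ (ctx_step (ac_root th)) (ctx_step (ac_root th)) f); auto.
  - apply (@rst_map _ (ctx_step (ac_root th)) (ctx_step (ac_root th)) f); auto.
Qed.

Lemma nf_ctx (f : term -> term) :
  (forall x y, ctx_step (rule_root th) x y -> ctx_step (rule_root th) (f x) (f y)) ->
  (forall x y, ctx_step (ac_root th) x y -> ctx_step (ac_root th) (f x) (f y)) ->
  forall a, nf th (f a) -> nf th a.
Proof. intros H1 H2 a Hn [b Hb]. apply Hn. exists (f b). apply rew_ctx; auto. Qed.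

Lemma nf_sub (u t : term) : subterm u t -> nf th t -> nf th u.
Proof.
  induction 1; intro Hn; auto; apply IHsubterm.
  all: match goal with
    | Hn : nf _ (Pub ?x) |- _ =>
        eapply (nf_ctx (fun z => Pub z)); [| | exact Hn]; intros; apply cs_pub; auto
    | Hn : nf _ (Fn ?g ?l), H : In _ ?l |- _ =>
        destruct (in_split _ _ H) as (l1&l2&->);
        eapply (nf_ctx (fun x => Fn g (l1 ++ x :: l2))); [| | exact Hn]; intros; apply cs_fn; auto
    | Hn : nf _ (?c ?x ?y), IH : subterm _ ?x |- _ =>
        eapply (nf_ctx (fun z => c z y)); [| | exact Hn]; intros
    | Hn : nf _ (?c ?x ?y), IH : subterm _ ?y |- _ =>
        eapply (nf_ctx (fun z => c x z)); [| | exact Hn]; intros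
    end.
  all: try (solve [apply cs_sign1; auto | apply cs_sign2; auto | apply cs_blind1; auto | apply cs_blind2; auto
     | apply cs_pair1; auto | apply cs_pair2; auto | apply cs_enc1; auto | apply cs_enc2; auto]).
Qed.

Lemma wf_sub (u t : term) : subterm u t -> wf th t -> wf th u.
Proof.
  induction 1; intro Hw; auto; apply IHsubterm; inversion Hw; subst; auto.
  rewrite Forall_forall in *; auto.
Qed.

Lemma subterm_trans (a b c : term) : subterm a b -> subterm b c -> subterm a c.
Proof. intros H1 H2; induction H2; eauto using st_refl, st_pub, st_sign1, st_sign2, st_blind1, st_blind2, st_pair1, st_pair2, st_enc1, st_enc2, st_fn. Qed.

Lemma nf_sign (a b : term) : nf th a -> nf th b -> nf th (Sign a b).
Proof.
  intros Ha Hb [w (u'&w'&H1&H2&H3)].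
  destruct (ac_inv_sign H1) as (a'&b'&->&Ha'&Hb').
  inversion H2; subst.
  - destruct (rule_root_shape Hlhs H) as (?&?&?); discriminate.
  - apply Ha. exists u. exists a', u. repeat split; auto. apply rst_refl.
  - apply Hb. exists u. exists b', u. repeat split; auto. apply rst_refl.
Qed.

Definition good (t : term) := wf th t /\ nf th t.

Lemma good_sub (u t : term) : subterm u t -> good t -> good u.
Proof. intros H [H1 H2]; split; [eapply wf_sub|eapply nf_sub]; eauto. Qed.

Lemma good_seq_iff G (T : term) : good_seq th G T <-> good T /\ Forall good G.
Proof. unfold good_seq, good. split; intro H. inversion H; auto. destruct H; constructor; auto. Qed.

Lemma nf_name n : nf th (Name S n).
Proof.
  intros [w (u'&w'&H1&H2&H3)]. apply ac_inv_name in H1; subst. inversion H2; subst.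
  destruct (rule_root_shape Hlhs H) as (?&?&?); discriminate.
Qed.

End NF.


Section CR.
Variable S : Type.
Variable th : eqtheory S.
Notation term := (term S).
Variable Hadm : admissible th.

Fixpoint Rp (t : term) : term := match t with
 | Name _ n => Name S n | Var _ n => Var S n | Pub a => Pub (Rp a)
 | Sign a b => Sign (Rp a) (Rp b) | Blind a b => Blind (Rp a) (Rp b)
 | Pair a b => Pair (Rp a) (Rp b) | Enc a b => Enc (Rp a) (Rp b)
 | Fn g l => if Nat.eq_dec (length l) (arity th g) then Fn g (map Rp l) else Name S 0
 end.

Lemma Rp_fn_good g l : length l = arity th g -> Rp (Fn g l) = Fn g (map Rp l).
Proof. intro H. cbn [Rp]. destruct (Nat.eq_dec (length l) (arity th g)); [reflexivity|contradiction]. Qed.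
Lemma Rp_fn_bad g l : length l <> arity th g -> Rp (Fn g l) = Name S 0.
Proof. intro H. cbn [Rp]. destruct (Nat.eq_dec (length l) (arity th g)); [contradiction|reflexivity]. Qed.

Lemma Rp_wf t : wf th (Rp t).
Proof.
  induction t using term_ind'; simpl; try (constructor; auto; fail).
  destruct (Nat.eq_dec (length l) (arity th g)); [|constructor].
  constructor. rewrite length_map; auto. apply Forall_map. auto.
Qed.

Lemma map_id_Forall (A : Type) (f : A -> A) l : Forall (fun x => f x = x) l -> map f l = l.
Proof. induction 1; simpl; congruence. Qed.

Lemma Rp_id t : wf th t -> Rp t = t.
Proof.
  induction t using term_ind'; simpl; intro Hw; inversion Hw; subst; f_equal; auto.
  destruct (Nat.eq_dec (length l) (arity th g)); [|contradiction].
  f_equal. apply map_id_Forall. rewrite Forall_forall in *. auto.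
Qed.

Lemma Rp_inst (s : nat -> term) p : wf_pat th p -> Rp (inst s p) = inst (fun n => Rp (s n)) p.
Proof.
  induction p using pat_ind'; cbn [inst]; auto.
  intro Hw; inversion Hw; subst.
  rewrite Rp_fn_good by (rewrite length_map; auto).
  f_equal. rewrite map_map. apply map_ext_in. intros a Ha.
  rewrite Forall_forall in *. auto.
Qed.

Lemma Rp_step x y : estep th x y -> Rp x = Rp y \/ estep th (Rp x) (Rp y).
Proof.
  destruct Hadm as (Hop&Hrules&_&_).
  induction 1.
  - right. apply cs_root. destruct H as [(o&Ho&[(a&b&->&->)|(a&b&c&->&->)])|(l&r&s&Hin&->&->)].
    + left. exists o. split; auto. left. exists (Rp a), (Rp b).
      split; repeat (rewrite Rp_fn_good; [cbn [map]| simpl; symmetry; auto]); auto.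
    + left. exists o. split; auto. right. exists (Rp a), (Rp b), (Rp c).
      split; repeat (rewrite Rp_fn_good; [cbn [map]| simpl; symmetry; auto]); auto.
    + right. destruct (Hrules _ _ Hin) as (Hl&Hr&_).
      exists l, r, (fun n => Rp (s n)). rewrite !Rp_inst; auto.
  - simpl; destruct IHctx_step as [E|E]; [left; congruence| right; apply cs_pub; auto].
  - simpl; destruct IHctx_step as [E|E]; [left; congruence| right; apply cs_sign1; auto].
  - simpl; destruct IHctx_step as [E|E]; [left; congruence| right; apply cs_sign2; auto].
  - simpl; destruct IHctx_step as [E|E]; [left; congruence| right; apply cs_blind1; auto].
  - simpl; destruct IHctx_step as [E|E]; [left; congruence| right; apply cs_blind2; auto].
  - simpl; destruct IHctx_step as [E|E]; [left; congruence| right; apply cs_pair1; auto].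
  - simpl; destruct IHctx_step as [E|E]; [left; congruence| right; apply cs_pair2; auto].
  - simpl; destruct IHctx_step as [E|E]; [left; congruence| right; apply cs_enc1; auto].
  - simpl; destruct IHctx_step as [E|E]; [left; congruence| right; apply cs_enc2; auto].
  - destruct (Nat.eq_dec (length (l1 ++ t :: l2)) (arity th g)) as [e|e].
    + rewrite !Rp_fn_good; [|rewrite length_app in *; simpl in *; auto|auto].
      rewrite !map_app. simpl. destruct IHctx_step as [E|E]; [left; congruence| right; apply cs_fn; auto].
    + rewrite !Rp_fn_bad; auto. rewrite length_app in *; simpl in *; auto.
Qed.

Definition wfstep (x y : term) := wf th x /\ wf th y /\ estep th x y.

Lemma e_eq_wf a b : wf th a -> wf th b -> e_eq th a b -> clos_refl_sym_trans _ wfstep a b.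
Proof.
  intros Ha Hb H. rewrite <- (Rp_id Ha), <- (Rp_id Hb).
  apply (@rst_map2 _ (estep th) wfstep Rp); auto.
  intros x y Hxy. destruct (Rp_step Hxy); auto. right. split; [|split]; auto using Rp_wf.
Qed.

Definition rs := clos_refl_trans term (rew th).

Definition Jn (a b : term) := exists c d, rs a c /\ rs b d /\ ac_eq th c d.

Lemma rew_ac_l a b c : ac_eq th a b -> rew th b c -> rew th a c.
Proof. intros H (b'&c'&H1&H2&H3). exists b', c'. repeat split; auto. eapply rst_trans; eauto. Qed.

Lemma AC_RS c d v : ac_eq th c d -> rs d v -> exists w, rs c w /\ ac_eq th w v.
Proof.
  intros H Hr. apply clos_rt_rt1n in Hr. destruct Hr as [|d1 v Hd Hr].
  - exists c; split; auto. apply rt_refl.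
  - exists v; split; [|apply rst_refl]. eapply rt_trans; [apply rt_step; eapply rew_ac_l; eauto|].
    apply clos_rt1n_rt; auto.
Qed.

Lemma estep_split x y : estep th x y -> ctx_step (ac_root th) x y \/ ctx_step (rule_root th) x y.
Proof.
  induction 1.
  - destruct H as [H|H]; [left|right]; apply cs_root; auto.
  - destruct IHctx_step as [E|E]; [left|right]; apply cs_pub; auto.
  - destruct IHctx_step as [E|E]; [left|right]; apply cs_sign1; auto.
  - destruct IHctx_step as [E|E]; [left|right]; apply cs_sign2; auto.
  - destruct IHctx_step as [E|E]; [left|right]; apply cs_blind1; auto.
  - destruct IHctx_step as [E|E]; [left|right]; apply cs_blind2; auto.
  - destruct IHctx_step as [E|E]; [left|right]; apply cs_pair1; auto.
  - destruct IHctx_step as [E|E]; [left|right]; apply cs_pair2; auto.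
  - destruct IHctx_step as [E|E]; [left|right]; apply cs_enc1; auto.
  - destruct IHctx_step as [E|E]; [left|right]; apply cs_enc2; auto.
  - destruct IHctx_step as [E|E]; [left|right]; apply cs_fn; auto.
Qed.

Lemma J_step a b b' : wf th b -> wf th b' -> Jn a b -> (estep th b b' \/ estep th b' b) -> Jn a b'.
Proof.
  destruct Hadm as (_&_&_&Hconf).
  intros Hb Hb' (c&d&Hac&Hbd&Hcd) [Hs|Hs]; destruct (estep_split Hs) as [E|E].
  - destruct (AC_RS (c:=b') (d:=b) (v:=d)) as (w&Hw1&Hw2); auto.
    + apply rst_sym, rst_step; auto.
    + exists c, w. repeat split; auto. eapply rst_trans; eauto. apply rst_sym; auto.
  - assert (Hr : rew th b b') by (exists b, b'; repeat split; auto; apply rst_refl).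
    destruct (Hconf b d b' Hb Hbd (rt_step _ _ _ _ Hr)) as (v1&v2&H1&H2&H3).
    destruct (AC_RS Hcd H1) as (w&Hw1&Hw2).
    exists w, v2. repeat split; auto. eapply rt_trans; eauto. eapply rst_trans; eauto.
  - destruct (AC_RS (c:=b') (d:=b) (v:=d)) as (w&Hw1&Hw2); auto.
    + apply rst_step; auto.
    + exists c, w. repeat split; auto. eapply rst_trans; eauto. apply rst_sym; auto.
  - assert (Hr : rew th b' b) by (exists b', b; repeat split; auto; apply rst_refl).
    exists c, d. repeat split; auto. eapply rt_trans; [apply rt_step; eauto| auto].
Qed.

Lemma CR_J a b : wf th a -> wf th b -> e_eq th a b -> Jn a b.
Proof.
  intros Ha Hb H. apply e_eq_wf in H; auto. apply clos_rst_rstn1_iff in H.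
  induction H as [|y z Hyz Hn IH].
  - exists a, a. repeat split; try apply rt_refl. apply rst_refl.
  - destruct Hyz as [(Hy&Hz&Hs)|(Hz&Hy&Hs)]; apply (J_step (b:=y)); auto.
Qed.

Lemma nf_rs a c : nf th a -> rs a c -> c = a.
Proof.
  intros Hn H. apply clos_rt_rt1n in H. destruct H; auto. exfalso; apply Hn; eauto.
Qed.

Lemma CR a b : wf th a -> wf th b -> nf th a -> nf th b -> e_eq th a b -> ac_eq th a b.
Proof.
  intros Ha Hb Hna Hnb H. destruct (CR_J Ha Hb H) as (c&d&H1&H2&H3).
  apply nf_rs in H1; apply nf_rs in H2; auto. subst; auto.
Qed.

End CR.


Section GO.
Local Hint Constructors subterm : core.
Variable S : Type.
Variable th : eqtheory S.
Notation term := (term S).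
Variable Hadm : admissible th.

Lemma sub_inv1 (c : term -> term) (g u : term) :
  subterm g (c u) -> (forall x, c x <> x) -> True. Proof. auto. Qed.

Lemma sub_fn_inv (g : term) f l : subterm g (Fn f l) -> g = Fn f l \/ exists w, In w l /\ subterm g w.
Proof. intro H; inversion H; subst; eauto. Qed.

Lemma gsub_ctx (R E : term -> term -> Prop) (a0 : term)
 (Erefl : forall x, E x x)
 (Hroot : forall a b, R a b -> subterm a a0 -> forall g, subterm g b -> guarded g ->
      exists g', subterm g' a /\ guarded g' /\ E g g')
 (Hc : forall x y, ctx_step R x y -> guarded x -> subterm x a0 -> E y x) :
 forall a b, ctx_step R a b -> subterm a a0 -> forall g, subterm g b -> guarded g ->
   exists g', subterm g' a /\ guarded g' /\ E g g'.
Proof.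
  induction 1; intros Ha0 gg Hg Hgg; eauto.
  all: try (inversion Hg; subst;
    [ eexists; split; [apply st_refl| split; [exact I| apply Hc; [first [apply cs_pub|apply cs_sign1|apply cs_sign2|apply cs_blind1|apply cs_blind2|apply cs_pair1|apply cs_pair2|apply cs_enc1|apply cs_enc2]; assumption|exact I|auto]]]
    | ..]).
  all: try (match goal with
    | IH : subterm ?t _ -> forall g, subterm g ?u -> _, H1 : subterm ?gg ?u |- _ =>
        assert (Ht : subterm t a0) by (eapply subterm_trans; [|exact Ha0]; eauto);
        destruct (IH Ht _ H1 Hgg) as (g'&G1&G2&G3); exists g'; split; [eauto|auto]
    end; fail).
  all: try (exists gg; split; [eauto|split; auto]; fail).
  apply sub_fn_inv in Hg. destruct Hg as [->|(w&Hw&Hgw)]; [contradiction|].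
  apply in_app_or in Hw. destruct Hw as [Hw|[<-|Hw]].
  - exists gg; repeat split; auto. eapply st_fn; eauto. apply in_or_app; auto.
  - destruct (IHctx_step ltac:(eapply subterm_trans; [|exact Ha0]; eapply st_fn; [apply in_or_app; right; left; auto|apply st_refl]) gg Hgw Hgg)
      as (g'&H1&H2&H3). exists g'; repeat split; auto. eapply st_fn; eauto. apply in_or_app; right; left; auto.
  - exists gg; repeat split; auto. eapply st_fn; eauto. apply in_or_app; right; right; auto.
Qed.



Lemma inst_sub (s : nat -> term) p g : subterm g (inst s p) -> guarded g -> exists n, pvar_in n p /\ subterm g (s n).
Proof.
  revert g. induction p using pat_ind'; intros gg Hg Hgg; simpl in *.
  - exists n; split; auto. constructor.
  - apply sub_fn_inv in Hg. destruct Hg as [->|(w&Hw&Hgw)]; [contradiction|].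
    apply in_map_iff in Hw. destruct Hw as (p&<-&Hp).
    rewrite Forall_forall in H. destruct (H p Hp gg Hgw Hgg) as (n&H1&H2).
    exists n; split; auto. econstructor; eauto.
Qed.

Lemma pvar_sub (s : nat -> term) n p : pvar_in n p -> subterm (s n) (inst s p).
Proof.
  induction 1; simpl. constructor. eapply st_fn; eauto. apply in_map; auto.
Qed.

Lemma ctx_step_flip (R : term -> term -> Prop) a b : ctx_step R a b -> ctx_step (fun x y => R y x) b a.
Proof. induction 1; [apply cs_root|apply cs_pub|apply cs_sign1|apply cs_sign2|apply cs_blind1|apply cs_blind2|apply cs_pair1|apply cs_pair2|apply cs_enc1|apply cs_enc2|apply cs_fn]; auto. Qed.

Lemma ac_root_sub a b : ac_root th a b ->
  (forall g, subterm g b -> guarded g -> subterm g a) /\ (forall g, subterm g a -> guarded g -> subterm g b).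
Proof.
  intros (o&_&[(x&y&->&->)|(x&y&z&->&->)]); split; intros gg Hg Hgg.
  all: apply sub_fn_inv in Hg; destruct Hg as [->|(w&Hw&Hgw)]; [contradiction|].
  all: simpl in Hw; repeat destruct Hw as [<-|Hw]; try contradiction.
  all: try (eapply st_fn; [|exact Hgw]; simpl; eauto 4; fail).
  all: try (apply sub_fn_inv in Hgw; destruct Hgw as [->|(w'&Hw'&Hgw')]; [contradiction|];
    simpl in Hw'; repeat destruct Hw' as [<-|Hw']; try contradiction).
  all: try (eapply st_fn; [|exact Hgw']; simpl; eauto 4; fail).
  all: try (eapply st_fn; [|eapply st_fn; [|exact Hgw']]; simpl; eauto 4; fail).
  all: first [ solve [eapply st_fn with (u := Fn o [x; y]); [simpl; auto| eapply st_fn; [|eassumption]; simpl; auto]]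
           | solve [eapply st_fn with (u := Fn o [y; z]); [simpl; auto| eapply st_fn; [|eassumption]; simpl; auto]] ].
Qed.

Definition Inv (G : list term) (u : term) := forall g, subterm g u -> guarded g ->
  exists g0 B, In B G /\ subterm g0 B /\ ac_eq th g g0.

Lemma Inv_acstep G a b : ctx_step (ac_root th) a b -> Inv G a -> Inv G b.
Proof.
  intros Hs HI gg Hg Hgg.
  assert (Hr : forall a' b', ac_root th a' b' -> subterm a' a -> forall g, subterm g b' -> guarded g ->
      exists g', subterm g' a' /\ guarded g' /\ ac_eq th g g').
  { intros a' b' Hr _ g Hg' Hgg'. exists g; repeat split; auto. apply (proj1 (ac_root_sub Hr)); auto. apply rst_refl. }
  assert (Hc : forall x y, ctx_step (ac_root th) x y -> guarded x -> subterm x a -> ac_eq th y x).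
  { intros x y Hxy _ _. apply rst_sym, rst_step; auto. }
  destruct (@gsub_ctx (ac_root th) (ac_eq th) a (fun x => rst_refl _ _ x) Hr Hc a b Hs (st_refl _) gg Hg Hgg)
    as (g'&H1&H2&H3).
  destruct (HI g' H1 H2) as (g0&B&HB&Hs0&Hac). exists g0, B; repeat split; auto. eapply rst_trans; eauto.
Qed.

Lemma Inv_acstep_rev G a b : ctx_step (ac_root th) b a -> Inv G a -> Inv G b.
Proof.
  intros Hs HI gg Hg Hgg. apply ctx_step_flip in Hs.
  assert (Hr : forall a' b', ac_root th b' a' -> subterm a' a -> forall g, subterm g b' -> guarded g ->
      exists g', subterm g' a' /\ guarded g' /\ ac_eq th g g').
  { intros a' b' Hr _ g Hg' Hgg'. exists g; repeat split; auto. apply (proj2 (ac_root_sub Hr)); auto. apply rst_refl. }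
  assert (Hc : forall x y, ctx_step (fun x y => ac_root th y x) x y -> guarded x -> subterm x a -> ac_eq th y x).
  { intros x y Hxy _ _. apply ctx_step_flip in Hxy. apply rst_step; auto. }
  destruct (@gsub_ctx (fun x y => ac_root th y x) (ac_eq th) a (fun x => rst_refl _ _ x) Hr Hc a b Hs (st_refl _) gg Hg Hgg)
    as (g'&H1&H2&H3).
  destruct (HI g' H1 H2) as (g0&B&HB&Hs0&Hac). exists g0, B; repeat split; auto. eapply rst_trans; eauto.
Qed.

Lemma Inv_ac G a b : ac_eq th a b -> Inv G a -> Inv G b.
Proof.
  intros H. apply clos_rst_rstn1_iff in H. induction H as [|y z Hyz Hn IH]; auto.
  intro Ha. destruct Hyz as [Hs|Hs]; [eapply Inv_acstep|eapply Inv_acstep_rev]; eauto.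
Qed.

Lemma Inv_rule G a b : Forall (good th) G -> ctx_step (rule_root th) a b -> Inv G a -> Inv G b.
Proof.
  destruct Hadm as (_&Hrules&_&_).
  intros HG Hs HI gg Hg Hgg.
  assert (Hr : forall a' b', rule_root th a' b' -> subterm a' a -> forall g, subterm g b' -> guarded g ->
      exists g', subterm g' a' /\ guarded g' /\ g = g').
  { intros a' b' (l&r&s&Hin&->&->) _ g Hg' Hgg'.
    destruct (@inst_sub s r g Hg' Hgg') as (n&Hn&Hgn). exists g; repeat split; auto.
    eapply subterm_trans; [exact Hgn|]. apply pvar_sub. apply (Hrules _ _ Hin); auto. }
  assert (Hc : forall x y, ctx_step (rule_root th) x y -> guarded x -> subterm x a -> y = x).
  { intros x y Hxy Hgx Hxa. exfalso.
    destruct (HI x Hxa Hgx) as (g0&B&HB&Hs0&Hac).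
    assert (Hn : nf th g0). { rewrite Forall_forall in HG. apply (good_sub Hs0 (HG B HB)). }
    apply (nf_ac Hn (rst_sym _ _ _ _ Hac)). exists y, x, y. repeat split; auto; apply rst_refl. }
  destruct (@gsub_ctx (rule_root th) eq a (@eq_refl _) Hr Hc a b Hs (st_refl _) gg Hg Hgg)
    as (g'&H1&H2&H3).
  subst. apply HI; auto.
Qed.

Lemma Inv_rs G a b : Forall (good th) G -> rs th a b -> Inv G a -> Inv G b.
Proof.
  intros HG H. induction H; auto.
  destruct H as (x'&y'&H1&H2&H3). intro Hx.
  apply (Inv_ac H3). apply (Inv_rule HG H2). apply (Inv_ac H1). auto.
Qed.

Lemma Inv_egen G t : egen th G t -> Inv G t.
Proof.
  revert t. induction t using term_ind'; intros He gg Hg Hgg; inversion He; subst;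
  try (match goal with H : In ?B G |- _ => exists gg, B; repeat split; auto; apply rst_refl end; fail).
  apply sub_fn_inv in Hg. destruct Hg as [->|(w&Hw&Hgw)]; [contradiction|].
  rewrite Forall_forall in *. eapply H; eauto.
Qed.

Lemma egen_wf G t : Forall (wf th) G -> egen th G t -> wf th t.
Proof.
  intro HG. rewrite Forall_forall in HG. revert t.
  induction t using term_ind'; intros He; inversion He; subst; auto.
  constructor; auto. rewrite Forall_forall in *. auto.
Qed.

Lemma guarded_origin G y t : Forall (good th) G -> good th y -> egen th G t -> e_eq th y t ->
  forall A, subterm A y -> guarded A -> exists A0 B, In B G /\ subterm A0 B /\ ac_eq th A A0.
Proof.
  intros HG [Hwy Hny] He Heq A HA HgA.
  assert (Hwt : wf th t). { apply (egen_wf (G:=G)); auto. rewrite Forall_forall in *. intros x Hx; apply HG; auto. }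
  destruct (CR_J Hadm Hwy Hwt Heq) as (c&d&H1&H2&H3).
  apply nf_rs in H1; auto. subst c.
  assert (Inv G d) by (eapply Inv_rs; eauto; apply Inv_egen; auto).
  apply (Inv_ac (rst_sym _ _ _ _ H3)) in H. apply H; auto.
Qed.

End GO.


Section PSI.
Variable S : Type.
Variable th : eqtheory S.
Notation term := (term S).
Variable Q : term -> Prop.
Variable HQ : forall x y, e_eq th x y -> Q x -> Q y.
Variable t0 : term.

Definition PP (u : term) := guarded u /\ Q u.

Fixpoint psi (t : term) : term :=
  if excluded_middle_informative (PP t) then t0 else
  match t with
  | Name _ n => Name S n | Var _ n => Var S n | Pub a => Pub (psi a)
  | Sign a b => Sign (psi a) (psi b) | Blind a b => Blind (psi a) (psi b)
  | Pair a b => Pair (psi a) (psi b) | Enc a b => Enc (psi a) (psi b)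
  | Fn g l => Fn g (map psi l)
  end.

Lemma psi_P u : PP u -> psi u = t0.
Proof. intro H. destruct u; cbn [psi]; destruct (excluded_middle_informative _); tauto. Qed.

Lemma psi_fn g l : psi (Fn g l) = Fn g (map psi l).
Proof. cbn [psi]. destruct (excluded_middle_informative _) as [[[] _]|_]; auto. Qed.

Lemma psi_inst (s : nat -> term) p : psi (inst s p) = inst (fun n => psi (s n)) p.
Proof.
  induction p using pat_ind'; cbn [inst]; auto.
  rewrite psi_fn. f_equal. rewrite map_map. apply map_ext_in. intros a Ha. rewrite Forall_forall in H; auto.
Qed.

Lemma PP_inv x y : e_eq th x y -> (guarded x <-> guarded y) -> (PP x <-> PP y).
Proof.
  intros H1 H2. unfold PP. split; intros [A B]; split; try tauto; eapply HQ; eauto. apply rst_sym; auto.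
Qed.

Lemma estep_e x y : estep th x y -> e_eq th x y.
Proof. intro; apply rst_step; auto. Qed.

Ltac ctxcase c :=
  match goal with
  | |- psi (?C1) = psi ?C2 \/ _ =>
    cbn [psi];
    destruct (excluded_middle_informative (PP C1)) as [h1|h1];
    destruct (excluded_middle_informative (PP C2)) as [h2|h2];
    [ left; auto
    | exfalso; apply h2; refine (proj1 (PP_inv _ _) h1); [|simpl; tauto]
    | exfalso; apply h1; refine (proj2 (PP_inv _ _) h2); [|simpl; tauto]
    | ]
  end.

Lemma psi_step a b : estep th a b -> psi a = psi b \/ estep th (psi a) (psi b).
Proof.
  intro Hs. assert (He : e_eq th a b) by (apply rst_step; auto). revert He.
  induction Hs; intro He.
  1:{ right. apply cs_root. destruct H as [(o&Ho&[(x&y&->&->)|(x&y&z&->&->)])|(l&r&s&Hin&->&->)].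
    + left. exists o; split; auto. left. exists (psi x), (psi y). rewrite !psi_fn. auto.
    + left. exists o; split; auto. right. exists (psi x), (psi y), (psi z). rewrite !psi_fn. cbn [map]. rewrite !psi_fn. auto.
    + right. exists l, r, (fun n => psi (s n)). rewrite !psi_inst. auto. }
  1: ctxcase Pub; auto; destruct IHHs as [E|E]; [apply rst_step; auto| left; congruence| right; apply cs_pub; auto].
  all: try (ctxcase Sign; auto; destruct IHHs as [E|E]; [apply rst_step; auto| left; congruence| right;
     first [apply cs_sign1|apply cs_sign2|apply cs_blind1|apply cs_blind2|apply cs_pair1|apply cs_pair2|apply cs_enc1|apply cs_enc2]; auto]; fail).
  rewrite !psi_fn, !map_app. simpl. destruct IHHs as [E|E]; [apply rst_step; auto| left; congruence| right; apply cs_fn; auto].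
Qed.

Lemma psi_e a b : e_eq th a b -> e_eq th (psi a) (psi b).
Proof. apply rst_map2. apply psi_step. Qed.

Lemma psi_id t : (forall u, subterm u t -> guarded u -> ~ Q u) -> psi t = t.
Proof.
  induction t using term_ind'; intro Hsb; cbn [psi];
  (destruct (excluded_middle_informative _) as [[h1 h2]|_]; [exfalso; eapply Hsb; [apply st_refl|auto|auto]|]).
  all: f_equal; auto.
  all: try (match goal with IH : _ -> psi ?x = ?x |- psi ?x = ?x => apply IH; intros; apply Hsb; auto; eauto using subterm end).
  apply map_id_Forall. rewrite Forall_forall in *. intros x Hx. apply H; auto. intros; eapply Hsb; eauto. eapply st_fn; eauto.
Qed.

Lemma psi_egen G L t : egen th (G ++ L) t -> (forall g, In g G -> psi g = g) -> (forall x, In x L -> psi x = t0) ->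
  egen th G t0 -> egen th G (psi t).
Proof.
  intros He HG HL H0. revert He. induction t using term_ind'; intro He; inversion He; subst.
  all: try (match goal with Hi : In _ (_ ++ _) |- _ => apply in_app_or in Hi; destruct Hi as [Hi|Hi];
       [rewrite HG; auto; constructor; auto | rewrite HL; auto] end).
  rewrite psi_fn. apply eg_fn. rewrite length_map; auto.
  rewrite Forall_forall in *. intros x Hx. apply in_map_iff in Hx. destruct Hx as (y&<-&Hy). auto.
Qed.

End PSI.


Section Main.
Variable S : Type.
Variable th : eqtheory S.
Notation term := (term S).
Notation ctx := (ctx S).
Variable Hadm : admissible th.
Notation good := (good th).
Local Hint Constructors subterm : core.

Lemma Hlhs : forall l r, In (l, r) (rules th) -> exists g ps, l = PF g ps.
Proof. destruct Hadm as (_&H&_). intros l r Hin. apply (H _ _ Hin). Qed.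

Inductive Syn : ctx -> term -> Prop :=
| Sid G T : good_seq th G T -> id_cond th G T -> Syn G T
| SpR G M N : good_seq th G (Pair M N) -> Syn G M -> Syn G N -> Syn G (Pair M N)
| SeR G M K : good_seq th G (Enc M K) -> Syn G M -> Syn G K -> Syn G (Enc M K)
| SsR G M K : good_seq th G (Sign M K) -> Syn G M -> Syn G K -> Syn G (Sign M K)
| SbR G M K : good_seq th G (Blind M K) -> Syn G M -> Syn G K -> Syn G (Blind M K).

Inductive Norm : ctx -> term -> Prop :=
| Nsyn G T : Syn G T -> Norm G T
| NpL G M N T : good_seq th G T -> In (Pair M N) G -> Norm (M :: N :: G) T -> Norm G T
| NsL G M K L N : good_seq th G N -> In (Sign M K) G -> In (Pub L) G -> ac_eq th K L ->
    Norm (M :: G) N -> Norm G N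
| NeL G M K N : good_seq th G N -> In (Enc M K) G -> Syn G K -> Norm (M :: K :: G) N -> Norm G N
| Nb1 G M K N : good_seq th G N -> In (Blind M K) G -> Syn G K -> Norm (M :: K :: G) N -> Norm G N
| Nb2 G M R K N : good_seq th G N -> In (Sign (Blind M R) K) G -> Syn G R ->
    Norm (Sign M K :: R :: G) N -> Norm G N
| Ngs G A M : good_seq th G M -> (exists B, In B (M :: G) /\ subterm A B) -> guarded A -> Syn G A ->
    Norm (A :: G) M -> Norm G M.

Lemma Syn_good G T : Syn G T -> good_seq th G T.
Proof. destruct 1; auto. Qed.
Lemma Norm_good G T : Norm G T -> good_seq th G T.
Proof. destruct 1; auto. apply Syn_good; auto. Qed.

Lemma gs_split G T : good_seq th G T -> good T /\ Forall good G.
Proof. apply good_seq_iff. Qed.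
Lemma gs_mk G T : good T -> Forall good G -> good_seq th G T.
Proof. intros; apply good_seq_iff; auto. Qed.

Lemma egen_mono G G' t : incl G G' -> egen th G t -> egen th G' t.
Proof.
  intro Hi. revert t. induction t using term_ind'; intro He; inversion He; subst; try (apply eg_hole; auto; fail).
  apply eg_fn; auto. rewrite Forall_forall in *. auto.
Qed.

Lemma id_mono G G' t : incl G G' -> id_cond th G t -> id_cond th G' t.
Proof. intros Hi (u&H1&H2). exists u; split; auto. eapply egen_mono; eauto. Qed.

Lemma id_in G x y : In y G -> e_eq th x y -> id_cond th G x.
Proof. intros; exists y; split; auto. apply eg_hole; auto. Qed.

Lemma Syn_weak G T : Syn G T -> forall G', incl G G' -> Forall good G' -> Syn G' T.
Proof.
  induction 1; intros G' Hi HG; apply gs_split in H; destruct H as [H H'].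
  1: apply Sid; [apply gs_mk; auto| eapply id_mono; eauto].
  all: econstructor; [apply gs_mk; auto|auto|auto].
Qed.

Lemma incl_cons2 (a : term) G G' : incl G G' -> incl (a :: G) (a :: G').
Proof. intros H x [->|Hx]; simpl; auto. Qed.

Lemma Norm_weak G T : Norm G T -> forall G', incl G G' -> Forall good G' -> Norm G' T.
Proof.
  induction 1; intros G' Hi HG.
  - apply Nsyn. eapply Syn_weak; eauto.
  - apply Norm_good in H1. apply gs_split in H1. destruct H1 as [_ H1]. inversion H1; subst. inversion H5; subst.
    apply gs_split in H; destruct H.
    eapply NpL; eauto. apply gs_mk; auto. apply IHNorm; auto. repeat apply incl_cons2; auto.
  - apply Norm_good in H3. apply gs_split in H3. destruct H3 as [_ H3]. inversion H3; subst.
    apply gs_split in H; destruct H.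
    eapply NsL; eauto. apply gs_mk; auto. apply IHNorm; auto. repeat apply incl_cons2; auto.
  - apply Norm_good in H2. apply gs_split in H2. destruct H2 as [_ H2]. inversion H2; subst. inversion H6; subst.
    apply gs_split in H; destruct H.
    eapply NeL; eauto. apply gs_mk; auto. eapply Syn_weak; eauto. apply IHNorm; auto. repeat apply incl_cons2; auto.
  - apply Norm_good in H2. apply gs_split in H2. destruct H2 as [_ H2]. inversion H2; subst. inversion H6; subst.
    apply gs_split in H; destruct H.
    eapply Nb1; eauto. apply gs_mk; auto. eapply Syn_weak; eauto. apply IHNorm; auto. repeat apply incl_cons2; auto.
  - apply Norm_good in H2. apply gs_split in H2. destruct H2 as [_ H2]. inversion H2; subst. inversion H6; subst.
    apply gs_split in H; destruct H.
    eapply Nb2; eauto. apply gs_mk; auto. eapply Syn_weak; eauto. apply IHNorm; auto. repeat apply incl_cons2; auto.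
  - apply Norm_good in H3. apply gs_split in H3. destruct H3 as [_ H3]. inversion H3; subst.
    apply gs_split in H; destruct H.
    eapply Ngs; eauto. apply gs_mk; auto.
    + match goal with Hx : exists B, In B (_ :: _) /\ _ |- _ => destruct Hx as (B&HB&HAB) end.
      exists B; split; auto. destruct HB as [HB|HB]; simpl; auto.
    + eapply Syn_weak; eauto.
    + apply IHNorm; auto. repeat apply incl_cons2; auto.
Qed.


Lemma Syn_ac G T : Syn G T -> forall T', ac_eq th T T' -> good T' -> Syn G T'.
Proof.
  induction 1; intros T' Hac HT'; apply gs_split in H; destruct H as [HT HG].
  1:{ apply Sid. apply gs_mk; auto. destruct H0 as (u&H1&H2). exists u; split; auto.
      eapply rst_trans; [apply rst_sym; apply ac_e; eauto| auto]. }
  1: destruct (ac_inv_pair Hac) as (a'&b'&->&Ha1&Ha2).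
  2: destruct (ac_inv_enc Hac) as (a'&b'&->&Ha1&Ha2).
  3: destruct (ac_inv_sign Hac) as (a'&b'&->&Ha1&Ha2).
  4: destruct (ac_inv_blind Hac) as (a'&b'&->&Ha1&Ha2).
  all: constructor; [apply gs_mk; auto| apply IHSyn1; auto| apply IHSyn2; auto].
  all: eapply good_sub; [|exact HT']; auto.
Qed.

Lemma Syn_e G T T' : Syn G T -> e_eq th T T' -> good T' -> Syn G T'.
Proof.
  intros H He HT'. pose proof (Syn_good H) as Hg. apply gs_split in Hg. destruct Hg as [[HwT HnT] _].
  assert (Hac : ac_eq th T T') by (destruct HT'; apply CR; auto).
  exact (Syn_ac H Hac HT').
Qed.

Lemma extract G x : Forall good G -> good x -> guarded x -> id_cond th G x ->
  exists A0 B, In B G /\ subterm A0 B /\ ac_eq th x A0.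
Proof.
  intros HG Hx Hgx (u&He&Heq). eapply guarded_origin; eauto.
Qed.

Lemma Forall_good_in G x : Forall good G -> In x G -> good x.
Proof. rewrite Forall_forall; auto. Qed.

Lemma gs_intro G T A B : Forall good G -> good T -> In B G -> subterm A B -> guarded A -> id_cond th G A ->
  Norm (A :: G) T -> Norm G T.
Proof.
  intros HG HT HB HAB HgA Hid HN. eapply Ngs; eauto.
  - apply gs_mk; auto.
  - exists B; split; simpl; auto.
  - apply Sid; auto. apply gs_mk; auto. eapply good_sub; eauto. eapply Forall_good_in; eauto.
Qed.

Lemma incl_cons_inv (a : term) G G' : incl (a :: G) G' -> incl G G'.
Proof. intros H x Hx; apply H; simpl; auto. Qed.

Lemma LIFT G K : Norm G K -> forall T, good T -> (exists B, In B (T :: G) /\ subterm K B) ->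
  (forall G', incl G G' -> Forall good G' -> Syn G' K -> Norm G' T) -> Norm G T.
Proof.
  induction 1; intros T' HT' (B&HB&HKB) Hk.
  - apply Hk; auto. apply incl_refl. apply Syn_good in H. apply gs_split in H; tauto.
  - apply gs_split in H. destruct H as [_ HG]. eapply NpL; eauto. apply gs_mk; auto.
    apply IHNorm; auto.
    + exists B; split; auto. destruct HB as [->|HB]; simpl; auto.
    + intros G' Hi HG'. apply Hk; auto. do 2 apply incl_cons_inv in Hi; auto.
  - apply gs_split in H. destruct H as [_ HG]. eapply NsL; eauto. apply gs_mk; auto.
    apply IHNorm; auto.
    + exists B; split; auto. destruct HB as [->|HB]; simpl; auto.
    + intros G' Hi HG'. apply Hk; auto. do 1 apply incl_cons_inv in Hi; auto.
  - apply gs_split in H. destruct H as [_ HG]. eapply NeL; eauto. apply gs_mk; auto.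
    apply IHNorm; auto.
    + exists B; split; auto. destruct HB as [->|HB]; simpl; auto.
    + intros G' Hi HG'. apply Hk; auto. do 2 apply incl_cons_inv in Hi; auto.
  - apply gs_split in H. destruct H as [_ HG]. eapply Nb1; eauto. apply gs_mk; auto.
    apply IHNorm; auto.
    + exists B; split; auto. destruct HB as [->|HB]; simpl; auto.
    + intros G' Hi HG'. apply Hk; auto. do 2 apply incl_cons_inv in Hi; auto.
  - apply gs_split in H. destruct H as [_ HG]. eapply Nb2; eauto. apply gs_mk; auto.
    apply IHNorm; auto.
    + exists B; split; auto. destruct HB as [->|HB]; simpl; auto.
    + intros G' Hi HG'. apply Hk; auto. do 2 apply incl_cons_inv in Hi; auto.
  - apply gs_split in H. destruct H as [_ HG]. apply Ngs with (A := A); auto.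
    + apply gs_mk; auto.
    + destruct H0 as (B'&[<-|HB']&HAB').
      * exists B; split; auto. eapply subterm_trans; eauto.
      * exists B'; split; simpl; auto.
    + apply IHNorm; auto.
      * exists B; split; auto. destruct HB as [->|HB]; simpl; auto.
      * intros G' Hi HG'. apply Hk; auto. do 1 apply incl_cons_inv in Hi; auto.
Qed.

Lemma RIGHT (c : term -> term -> term) :
  (forall G M N, good_seq th G (c M N) -> Syn G M -> Syn G N -> Syn G (c M N)) ->
  (forall M N, subterm M (c M N) /\ subterm N (c M N)) ->
  forall G M N, Norm G M -> Norm G N -> good (c M N) -> Norm G (c M N).
Proof.
  intros Hc Hsub G M N HM HN Hg. destruct (Hsub M N) as [H1 H2].
  apply (LIFT HM); auto. { exists (c M N); split; simpl; auto. }
  intros G' Hi HG' HsM. apply (LIFT (Norm_weak HN Hi HG')); auto. { exists (c M N); split; simpl; auto. }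
  intros G'' Hi' HG'' HsN. apply Nsyn. apply Hc; auto. apply gs_mk; auto. eapply Syn_weak; eauto.
Qed.

Lemma RIGHT_pair G M N : Norm G M -> Norm G N -> good (Pair M N) -> Norm G (Pair M N).
Proof. apply RIGHT; [intros; apply SpR; auto| split; auto]. Qed.
Lemma RIGHT_enc G M N : Norm G M -> Norm G N -> good (Enc M N) -> Norm G (Enc M N).
Proof. apply RIGHT; [intros; apply SeR; auto| split; auto]. Qed.
Lemma RIGHT_sign G M N : Norm G M -> Norm G N -> good (Sign M N) -> Norm G (Sign M N).
Proof. apply RIGHT; [intros; apply SsR; auto| split; auto]. Qed.
Lemma RIGHT_blind G M N : Norm G M -> Norm G N -> good (Blind M N) -> Norm G (Blind M N).
Proof. apply RIGHT; [intros; apply SbR; auto| split; auto]. Qed.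


Lemma ext_split G D : Forall good G -> (forall x, In x D -> In x G \/ Syn G x) ->
  exists L, (forall x, In x L -> Syn G x /\ guarded x) /\ (forall x, In x D -> In x L \/ id_cond th G x).
Proof.
  intros HG. induction D as [|x D IH]; intro Hx.
  - exists []; split; intros ? [].
  - destruct IH as (L&H1&H2). { intros y Hy; apply Hx; simpl; auto. }
    destruct (Hx x (or_introl eq_refl)) as [Hin|Hs].
    + exists L; split; auto. intros y [<-|Hy]; auto. right. eapply id_in; [exact Hin|]. apply rst_refl.
    + inversion Hs; subst.
      * exists L; split; auto. intros y [<-|Hy]; auto.
      * exists (Pair M N :: L). split. { intros y [<-|Hy]; auto. split; simpl; auto. }
        intros y [<-|Hy]; simpl; auto. destruct (H2 y Hy); auto.
      * exists (Enc M K :: L). split. { intros y [<-|Hy]; auto. split; simpl; auto. }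
        intros y [<-|Hy]; simpl; auto. destruct (H2 y Hy); auto.
      * exists (Sign M K :: L). split. { intros y [<-|Hy]; auto. split; simpl; auto. }
        intros y [<-|Hy]; simpl; auto. destruct (H2 y Hy); auto.
      * exists (Blind M K :: L). split. { intros y [<-|Hy]; auto. split; simpl; auto. }
        intros y [<-|Hy]; simpl; auto. destruct (H2 y Hy); auto.
Qed.

Lemma Forall_Forall2_ex (A B : Type) (P : A -> B -> Prop) l :
  Forall (fun x => exists y, P x y) l -> exists l', Forall2 P l l'.
Proof.
  induction 1 as [|x l (y&Hy) _ (l'&Hl')]. exists []; constructor. exists (y :: l'); constructor; auto.
Qed.

Lemma subst_egen D D' t : egen th D t -> (forall y, In y D -> id_cond th D' y) -> id_cond th D' t.
Proof.
  intros He HD. revert He. induction t using term_ind'; intro He; inversion He; subst; auto.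
  assert (Hex : Forall (fun x => exists u, egen th D' u /\ e_eq th x u) l).
  { rewrite Forall_forall in *. intros x Hx. apply H; auto. }
  apply Forall_Forall2_ex in Hex. destruct Hex as (l'&Hl').
  exists (Fn g l'). split.
  - apply eg_fn. rewrite <- (Forall2_length Hl'); auto.
    clear -Hl'. induction Hl'; constructor; tauto.
  - refine (@cong_fn _ _ g l l' _ []). clear -Hl'. induction Hl'; constructor; tauto.
Qed.

Lemma Syn_has_egen G x : Syn G x -> exists t0, egen th G t0.
Proof. induction 1; auto. destruct H0 as (u&?&?); eauto. Qed.

Lemma ID_CUT_L n : forall L G T t, length L <= n -> Forall good G -> good T -> egen th (G ++ L) t -> e_eq th T t ->
  (forall x, In x L -> Syn G x /\ guarded x) -> Norm G T.
Proof.
  induction n as [|n IHn]; intros L G T t Hlen HG HT He Heq HL;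
  (destruct L as [|x0 L0];
   [apply Nsyn; apply Sid; [apply gs_mk; auto| exists t; rewrite app_nil_r in He; auto]|]).
  1: simpl in Hlen; lia.
  remember (x0 :: L0) as L eqn:EL.
  destruct (classic (exists x, In x L /\ exists A' B, In B (T :: G) /\ subterm A' B /\ guarded A' /\ e_eq th A' x))
    as [(x&Hx&A'&B&HB&HAB&HgA&HeA)|Hno].
  -
    assert (HgA' : good A').
    { eapply good_sub; eauto. destruct HB as [<-|HB]; auto. eapply Forall_good_in; eauto. }
    assert (HsA : Syn G A').
    { destruct (HL x Hx) as [Hs _]. eapply Syn_e; eauto. apply rst_sym; auto. }
    destruct (in_split _ _ Hx) as (L1&L2&->).
    assert (Hid : id_cond th ((A' :: G) ++ L1 ++ L2) t).
    { eapply subst_egen; eauto. intros y Hy. apply in_app_or in Hy.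
      destruct Hy as [Hy|Hy]; [eapply id_in with (y := y); [simpl; rewrite !in_app_iff; tauto| apply rst_refl]|].
      apply in_app_or in Hy. destruct Hy as [Hy|[<-|Hy]].
      - eapply id_in with (y := y); [simpl; rewrite !in_app_iff; tauto| apply rst_refl].
      - eapply id_in with (y := A'); [simpl; auto| apply rst_sym; auto].
      - eapply id_in with (y := y); [simpl; rewrite !in_app_iff; simpl; tauto| apply rst_refl]. }
    destruct Hid as (u&Hu1&Hu2).
    apply Ngs with (A := A'); auto.
    + apply gs_mk; auto.
    + exists B; split; auto.
    + apply IHn with (L := L1 ++ L2) (t := u); auto.
      * rewrite length_app in *; simpl in Hlen; lia.
      * eapply rst_trans; [exact Heq| exact Hu2].
      * intros y Hy. destruct (HL y) as [Hy1 Hy2]. { rewrite in_app_iff in *; simpl; tauto. }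
        split; auto. eapply Syn_weak; eauto. intros z Hz; simpl; auto.
  -
    subst L. destruct (HL x0 (or_introl eq_refl)) as [Hs0 _]. destruct (Syn_has_egen Hs0) as (t0&Ht0).
    set (Q := fun u => exists x, In x (x0 :: L0) /\ e_eq th u x).
    assert (HQ : forall a b, e_eq th a b -> Q a -> Q b).
    { intros a b Hab (x&Hx&Hax). exists x; split; auto. eapply rst_trans; eauto. apply rst_sym; auto. }
    assert (Hnot : forall B u, In B (T :: G) -> subterm u B -> guarded u -> ~ Q u).
    { intros B u HB Hu Hgu (x&Hx&Hux). apply Hno. exists x; split; auto. exists u, B; auto. }
    assert (HT' : psi Q t0 T = T). { apply psi_id. intros u Hu Hgu. eapply Hnot; eauto. simpl; auto. }
    apply Nsyn. apply Sid; [apply gs_mk; auto|].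
    exists (psi Q t0 t). split.
    + eapply psi_egen; eauto.
      * intros g Hg. apply psi_id. intros u Hu Hgu. eapply Hnot; eauto. simpl; auto.
      * intros x Hx. apply psi_P. split. { apply (HL x Hx). } exists x; split; auto. apply rst_refl.
    + rewrite <- HT'. apply psi_e; auto.
Qed.


Definition Ext (G D : ctx) := forall x, In x D -> In x G \/ Syn G x.

Lemma SYNCUT D T : Syn D T -> forall G, Forall good G -> Ext G D -> Norm G T.
Proof.
  induction 1; intros G' HG' HE.
  - destruct (@ext_split G' G HG' HE) as (L&HL1&HL2).
    destruct H0 as (u&Hu1&Hu2).
    destruct (subst_egen (D' := G' ++ L) Hu1) as (u'&Hu'1&Hu'2).
    { intros y Hy. destruct (HL2 y Hy) as [HyL|Hid].
      - eapply id_in with (y := y); [rewrite in_app_iff; auto| apply rst_refl].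
      - eapply id_mono; [|exact Hid]. intros z Hz; rewrite in_app_iff; auto. }
    apply gs_split in H. destruct H as [HT _].
    apply ID_CUT_L with (n := length L) (L := L) (t := u'); auto. eapply rst_trans; eauto.
  - apply gs_split in H. destruct H as [HT _]. apply RIGHT_pair; auto.
  - apply gs_split in H. destruct H as [HT _]. apply RIGHT_enc; auto.
  - apply gs_split in H. destruct H as [HT _]. apply RIGHT_sign; auto.
  - apply gs_split in H. destruct H as [HT _]. apply RIGHT_blind; auto.
Qed.


Lemma Ext_weak G G' D : Ext G D -> incl G G' -> Forall good G' -> Ext G' D.
Proof.
  intros HE Hi HG x Hx. destruct (HE x Hx) as [H|H]; [left; auto| right; eapply Syn_weak; eauto].
Qed.

Lemma Ext_cons G D x : (In x G \/ Syn G x) -> Ext G D -> Ext G (x :: D).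
Proof. intros H HE y [<-|Hy]; auto. Qed.

Lemma Syn_ac_in G x y : In y G -> ac_eq th x y -> Forall good G -> good x -> Syn G x.
Proof. intros Hy Hxy HG Hx. apply Sid. apply gs_mk; auto. eapply id_in; eauto. apply ac_e; auto. Qed.

Lemma good_in_norm D T x : Norm D T -> In x D -> good x.
Proof. intros H Hx. apply Norm_good in H. apply gs_split in H. eapply Forall_good_in; [apply H| auto]. Qed.

Lemma AVAIL (c : term -> term -> term)
  (Hinv : forall G M K, Syn G (c M K) -> (Syn G M /\ Syn G K) \/ id_cond th G (c M K))
  (Hac : forall M K t, ac_eq th (c M K) t -> exists M' K', t = c M' K' /\ ac_eq th M M' /\ ac_eq th K K')
  (Hg : forall M K, guarded (c M K))
  G M K T : (In (c M K) G \/ Syn G (c M K)) -> Forall good G -> good T -> good (c M K) ->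
  ((Syn G M /\ Syn G K) -> Norm G T) ->
  (forall G1 M1 K1, incl G G1 -> Forall good G1 -> In (c M1 K1) G1 -> ac_eq th M M1 -> ac_eq th K K1 -> Norm G1 T) ->
  Norm G T.
Proof.
  intros Hav HG HT HcMK K1 K2. destruct Hav as [Hin|Hs].
  - apply K2 with M K; auto. apply incl_refl. apply rst_refl. apply rst_refl.
  - destruct (Hinv _ _ _ Hs) as [Hs'|Hid]; auto.
    destruct (extract HG HcMK (Hg M K) Hid) as (A0&B&HB&HAB&Hac0).
    destruct (Hac _ _ _ Hac0) as (M1&K1'&->&H1&H2).
    apply gs_intro with (A := c M1 K1') (B := B); auto.
    + destruct Hid as (u&Hu1&Hu2). exists u; split; auto. eapply rst_trans; [|exact Hu2].
      apply rst_sym. apply ac_e; auto.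
    + apply K2 with M1 K1'; auto.
      * intros z Hz; simpl; auto.
      * constructor; auto. eapply good_sub; eauto. eapply Forall_good_in; eauto.
      * simpl; auto.
Qed.

Lemma AV_pair G M K T : (In (Pair M K) G \/ Syn G (Pair M K)) -> Forall good G -> good T -> good (Pair M K) ->
  ((Syn G M /\ Syn G K) -> Norm G T) ->
  (forall G1 M1 K1, incl G G1 -> Forall good G1 -> In (Pair M1 K1) G1 -> ac_eq th M M1 -> ac_eq th K K1 -> Norm G1 T) ->
  Norm G T.
Proof. apply AVAIL; [intros G0 M0 K0 H; inversion H; subst; auto| apply ac_inv_pair| simpl; auto]. Qed.
Lemma AV_enc G M K T : (In (Enc M K) G \/ Syn G (Enc M K)) -> Forall good G -> good T -> good (Enc M K) ->
  ((Syn G M /\ Syn G K) -> Norm G T) ->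
  (forall G1 M1 K1, incl G G1 -> Forall good G1 -> In (Enc M1 K1) G1 -> ac_eq th M M1 -> ac_eq th K K1 -> Norm G1 T) ->
  Norm G T.
Proof. apply AVAIL; [intros G0 M0 K0 H; inversion H; subst; auto| apply ac_inv_enc| simpl; auto]. Qed.
Lemma AV_sign G M K T : (In (Sign M K) G \/ Syn G (Sign M K)) -> Forall good G -> good T -> good (Sign M K) ->
  ((Syn G M /\ Syn G K) -> Norm G T) ->
  (forall G1 M1 K1, incl G G1 -> Forall good G1 -> In (Sign M1 K1) G1 -> ac_eq th M M1 -> ac_eq th K K1 -> Norm G1 T) ->
  Norm G T.
Proof. apply AVAIL; [intros G0 M0 K0 H; inversion H; subst; auto| apply ac_inv_sign| simpl; auto]. Qed.
Lemma AV_blind G M K T : (In (Blind M K) G \/ Syn G (Blind M K)) -> Forall good G -> good T -> good (Blind M K) ->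
  ((Syn G M /\ Syn G K) -> Norm G T) ->
  (forall G1 M1 K1, incl G G1 -> Forall good G1 -> In (Blind M1 K1) G1 -> ac_eq th M M1 -> ac_eq th K K1 -> Norm G1 T) ->
  Norm G T.
Proof. apply AVAIL; [intros G0 M0 K0 H; inversion H; subst; auto| apply ac_inv_blind| simpl; auto]. Qed.

Lemma AV_pub G L T : (In (Pub L) G \/ Syn G (Pub L)) -> Forall good G -> good T -> good (Pub L) ->
  (forall G1 L1, incl G G1 -> Forall good G1 -> In (Pub L1) G1 -> ac_eq th L L1 -> Norm G1 T) ->
  Norm G T.
Proof.
  intros Hav HG HT HcL K2. destruct Hav as [Hin|Hs].
  - apply K2 with L; auto. apply incl_refl. apply rst_refl.
  - assert (Hid : id_cond th G (Pub L)) by (inversion Hs; subst; auto).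
    destruct (extract HG HcL I Hid) as (A0&B&HB&HAB&Hac0).
    destruct (ac_inv_pub Hac0) as (L1&->&H1).
    assert (Hgp : guarded (Pub L1)) by exact I.
    apply gs_intro with (A := Pub L1) (B := B); auto.
    + destruct Hid as (u&Hu1&Hu2). exists u; split; auto. eapply rst_trans; [|exact Hu2].
      apply rst_sym. apply ac_e; auto.
    + apply K2 with L1; auto.
      * intros z Hz; simpl; auto.
      * constructor; auto. eapply good_sub; eauto. eapply Forall_good_in; eauto.
      * simpl; auto.
Qed.

Lemma SUBSYN G B A : Syn G B -> subterm A B -> guarded A ->
  Syn G A \/ exists A1 B1, In B1 G /\ subterm A1 B1 /\ ac_eq th A A1.
Proof.
  intros H. revert A. induction H; intros A HAB HgA.
  1:{ apply gs_split in H. destruct H as [HT HG]. destruct H0 as (u&Hu1&Hu2). right.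
    eapply guarded_origin; eauto. }
  all: inversion HAB; subst; [left; first [apply SpR|apply SeR|apply SsR|apply SbR]; auto| |]; eauto.
Qed.


Lemma incl_tr3 (G0 G1 G2 : ctx) : incl G0 G1 -> incl G1 G2 -> incl G0 G2.
Proof. intros H1 H2 x Hx; auto. Qed.

Lemma good_in_ctx G x : good_seq th G x -> good x.
Proof. intro H; apply gs_split in H; tauto. Qed.
Lemma good_ctx G x : good_seq th G x -> Forall good G.
Proof. intro H; apply gs_split in H; tauto. Qed.

Ltac gsub H := eapply good_sub; [|exact H]; eauto.

Lemma good_sign M K : good M -> good K -> good (Sign M K).
Proof. intros [H1 H2] [H3 H4]. split. constructor; auto. apply nf_sign; auto. apply Hlhs. Qed.

Lemma MAIN D T : Norm D T -> forall G, Forall good G -> Ext G D -> Norm G T.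
Proof.
  induction 1; intros G0 HG0 HE.
  - eapply SYNCUT; eauto.
  -
    assert (HT : good T) by (eapply good_in_ctx; eauto).
    assert (HP : good (Pair M N)) by (eapply Forall_good_in; [eapply good_ctx; eauto| auto]).
    assert (HM : good M) by (eapply good_in_norm; eauto; simpl; auto).
    assert (HN : good N) by (eapply good_in_norm; eauto; simpl; auto).
    apply (@AV_pair G0 M N T); auto.
    + intros [HsM HsN]. apply IHNorm; auto. apply Ext_cons; auto. apply Ext_cons; auto.
    + intros G1 M1 N1 Hi HG1 Hin1 Ha1 Ha2.
      assert (HP1 : good (Pair M1 N1)) by (eapply Forall_good_in; eauto).
      assert (HG' : Forall good (M1 :: N1 :: G1)) by (repeat constructor; auto; gsub HP1).
      apply NpL with M1 N1; auto. apply gs_mk; auto.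
      apply IHNorm; auto.
      apply Ext_cons; [right; eapply Syn_ac_in with (y := M1); simpl; auto|].
      apply Ext_cons; [right; eapply Syn_ac_in with (y := N1); simpl; auto|].
      eapply Ext_weak; eauto. intros z Hz; simpl; auto.
  -
    assert (HT : good N) by (eapply good_in_ctx; eauto).
    assert (HS : good (Sign M K)) by (eapply Forall_good_in; [eapply good_ctx; eauto| auto]).
    assert (HPL : good (Pub L)) by (eapply Forall_good_in; [eapply good_ctx; eauto| auto]).
    assert (HM : good M) by (eapply good_in_norm; eauto; simpl; auto).
    apply (@AV_sign G0 M K N); auto.
    + intros [HsM _]. apply IHNorm; auto. apply Ext_cons; auto.
    + intros G1 M1 K1 Hi HG1 Hin1 Ha1 Ha2.
      apply (@AV_pub G1 L N); auto.
      * destruct (HE _ H1) as [Hx|Hx]; [left; auto| right; eapply Syn_weak; eauto].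
      * intros G2 L1 Hi2 HG2 HinP2 HL1.
        assert (HS1 : good (Sign M1 K1)) by (eapply Forall_good_in; eauto).
        assert (HG' : Forall good (M1 :: G2)) by (repeat constructor; auto; gsub HS1).
        assert (HKL : ac_eq th K1 L1).
        { eapply rst_trans; [apply rst_sym; exact Ha2|]. eapply rst_trans; [exact H2| exact HL1]. }
        apply NsL with M1 K1 L1; auto.
        -- apply gs_mk; auto.
        -- apply IHNorm; auto.
           apply Ext_cons; [right; eapply Syn_ac_in with (y := M1); simpl; auto|].
           eapply Ext_weak; eauto. intros z Hz; simpl; auto.
  -
    assert (HT : good N) by (eapply good_in_ctx; eauto).
    assert (HE0 : good (Enc M K)) by (eapply Forall_good_in; [eapply good_ctx; eauto| auto]).
    assert (HM : good M) by (eapply good_in_norm; eauto; simpl; auto).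
    assert (HK : good K) by (eapply good_in_norm; eauto; simpl; auto).
    apply (@AV_enc G0 M K N); auto.
    + intros [HsM HsK]. apply IHNorm; auto. apply Ext_cons; auto. apply Ext_cons; auto.
    + intros G1 M1 K1 Hi HG1 Hin1 Ha1 Ha2.
      assert (HE1 : good (Enc M1 K1)) by (eapply Forall_good_in; eauto).
      assert (HsK1 : Syn G K1) by (apply Syn_ac with K; auto; gsub HE1).
      assert (HNK1 : Norm G1 K1) by (apply SYNCUT with G; auto; eapply Ext_weak; eauto).
      apply (LIFT HNK1); auto. { exists (Enc M1 K1); split; simpl; auto. }
      intros G' Hi' HG' HsK1'.
      assert (HG'' : Forall good (M1 :: K1 :: G')) by (repeat constructor; auto; gsub HE1).
      apply NeL with M1 K1; auto. apply gs_mk; auto.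
      apply IHNorm; auto.
      apply Ext_cons; [right; eapply Syn_ac_in with (y := M1); simpl; auto|].
      apply Ext_cons; [right; eapply Syn_ac_in with (y := K1); simpl; auto|].
      eapply Ext_weak; eauto. intros z Hz; simpl; auto.
  -
    assert (HT : good N) by (eapply good_in_ctx; eauto).
    assert (HE0 : good (Blind M K)) by (eapply Forall_good_in; [eapply good_ctx; eauto| auto]).
    assert (HM : good M) by (eapply good_in_norm; eauto; simpl; auto).
    assert (HK : good K) by (eapply good_in_norm; eauto; simpl; auto).
    apply (@AV_blind G0 M K N); auto.
    + intros [HsM HsK]. apply IHNorm; auto. apply Ext_cons; auto. apply Ext_cons; auto.
    + intros G1 M1 K1 Hi HG1 Hin1 Ha1 Ha2.
      assert (HE1 : good (Blind M1 K1)) by (eapply Forall_good_in; eauto).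
      assert (HsK1 : Syn G K1) by (apply Syn_ac with K; auto; gsub HE1).
      assert (HNK1 : Norm G1 K1) by (apply SYNCUT with G; auto; eapply Ext_weak; eauto).
      apply (LIFT HNK1); auto. { exists (Blind M1 K1); split; simpl; auto. }
      intros G' Hi' HG' HsK1'.
      assert (HG'' : Forall good (M1 :: K1 :: G')) by (repeat constructor; auto; gsub HE1).
      apply Nb1 with M1 K1; auto. apply gs_mk; auto.
      apply IHNorm; auto.
      apply Ext_cons; [right; eapply Syn_ac_in with (y := M1); simpl; auto|].
      apply Ext_cons; [right; eapply Syn_ac_in with (y := K1); simpl; auto|].
      eapply Ext_weak; eauto. intros z Hz; simpl; auto.
  -
    assert (HT : good N) by (eapply good_in_ctx; eauto).
    assert (HX : good (Sign (Blind M R) K)) by (eapply Forall_good_in; [eapply good_ctx; eauto| auto]).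
    assert (HSMK : good (Sign M K)) by (eapply good_in_norm; eauto; simpl; auto).
    assert (HR : good R) by (eapply good_in_norm; eauto; simpl; auto).
    assert (HBl : good (Blind M R)) by gsub HX.
    assert (HM : good M) by gsub HSMK.
    assert (HK : good K) by gsub HSMK.
    apply (@AV_sign G0 (Blind M R) K N); auto.
    + intros [HsB HsK]. apply (@AV_blind G0 M R N); auto.
      * intros [HsM HsR]. apply IHNorm; auto.
        apply Ext_cons; [right; apply SsR; auto; apply gs_mk; auto|].
        apply Ext_cons; auto.
      * intros G1 M1 R1 Hi HG1 Hin1 Ha1 Ha2.
        assert (HE1 : good (Blind M1 R1)) by (eapply Forall_good_in; eauto).
        assert (HsR1 : Syn G R1) by (apply Syn_ac with R; auto; gsub HE1).
        assert (HNR1 : Norm G1 R1) by (apply SYNCUT with G; auto; eapply Ext_weak; eauto).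
        apply (LIFT HNR1); auto. { exists (Blind M1 R1); split; simpl; auto. }
        intros G' Hi' HG' HsR1'.
        assert (HG'' : Forall good (M1 :: R1 :: G')) by (repeat constructor; auto; gsub HE1).
        apply Nb1 with M1 R1; auto. apply gs_mk; auto.
        apply IHNorm; auto.
        apply Ext_cons.
        { right. apply SsR; [apply gs_mk; auto| |].
          - eapply Syn_ac_in with (y := M1); simpl; auto.
          - eapply Syn_weak; eauto. intros z Hz; simpl; auto. }
        apply Ext_cons; [right; eapply Syn_ac_in with (y := R1); simpl; auto|].
        eapply Ext_weak; eauto. intros z Hz; simpl; auto.
    + intros G1 B1 K1 Hi HG1 Hin1 Ha1 Ha2.
      destruct (ac_inv_blind Ha1) as (M1&R1&->&HM1&HR1).
      assert (HE1 : good (Sign (Blind M1 R1) K1)) by (eapply Forall_good_in; eauto).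
      assert (HsR1 : Syn G R1) by (apply Syn_ac with R; auto; gsub HE1).
      assert (HNR1 : Norm G1 R1) by (apply SYNCUT with G; auto; eapply Ext_weak; eauto).
      apply (LIFT HNR1); auto. { exists (Sign (Blind M1 R1) K1); split; simpl; auto. }
      intros G' Hi' HG' HsR1'.
      assert (HG'' : Forall good (Sign M1 K1 :: R1 :: G')).
      { constructor; [apply good_sign; gsub HE1|]. constructor; [gsub HE1|]. auto. }
      apply Nb2 with M1 R1 K1; auto. apply gs_mk; auto.
      apply IHNorm; auto.
      apply Ext_cons.
      { right. eapply Syn_ac_in with (y := Sign M1 K1); simpl; auto. apply cong_sign; auto. }
      apply Ext_cons; [right; eapply Syn_ac_in with (y := R1); simpl; auto|].
      eapply Ext_weak; eauto. intros z Hz; simpl; auto.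
  -
    assert (HT : good M) by (eapply good_in_ctx; eauto).
    assert (HA : good A) by (eapply good_in_norm; eauto; simpl; auto).
    destruct H0 as (B&HB&HAB).
    assert (Hcase : (exists B', In B' (M :: G0) /\ subterm A B') \/ Syn G0 B).
    { destruct HB as [HBe|HB]. left; exists B; split; auto; left; auto.
      destruct (HE B HB) as [HB'|HB']; [left; exists B; simpl; auto| right; auto]. }
    destruct Hcase as [HB'|HsB].
    + assert (HNA : Norm G0 A) by (eapply SYNCUT; eauto).
      apply (LIFT HNA); auto. intros G' Hi' HG' HsA'.
      apply IHNorm; auto. apply Ext_cons; auto. eapply Ext_weak; eauto.
    + destruct (SUBSYN HsB HAB H1) as [HsA0|(A1&B1&HB1&HAB1&HAA1)].
      * apply IHNorm; auto. apply Ext_cons; auto.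
      * assert (HA1 : good A1) by (eapply good_sub; eauto; eapply Forall_good_in; eauto).
        assert (HsA1 : Syn G A1) by (apply Syn_ac with A; auto).
        assert (HNA : Norm G0 A1) by (eapply SYNCUT; eauto).
        apply (LIFT HNA); auto. { exists B1; split; simpl; auto. }
        intros G' Hi' HG' HsA'.
        apply IHNorm; auto. apply Ext_cons; [right; apply Syn_ac with A1; auto; apply rst_sym; auto|].
        eapply Ext_weak; eauto.
Qed.


Lemma Ext_self G A : Syn G A -> Ext G (A :: G).
Proof. intros H x [<-|Hx]; auto. Qed.

Lemma CUT G M : Norm G M -> forall T, Norm (M :: G) T -> Norm G T.
Proof.
  induction 1; intros T' HT'.
  all: pose proof (Norm_good HT') as Hg'; apply gs_split in Hg'; destruct Hg' as [HgT HgMG];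
       inversion HgMG; subst.
  - apply (MAIN HT'); auto. apply Ext_self; auto.
  - assert (HG1 : Forall good (M :: N :: G)) by (eapply good_ctx; eapply Norm_good; eauto).
    apply NpL with M N; auto. apply gs_mk; auto. apply IHNorm.
    eapply Norm_weak; eauto. intros z [<-|Hz]; simpl; auto.
  - assert (HG1 : Forall good (M :: G)) by (eapply good_ctx; eapply Norm_good; eauto).
    apply NsL with M K L; auto. apply gs_mk; auto. apply IHNorm.
    eapply Norm_weak; eauto. intros z [<-|Hz]; simpl; auto.
  - assert (HG1 : Forall good (M :: K :: G)) by (eapply good_ctx; eapply Norm_good; eauto).
    apply NeL with M K; auto. apply gs_mk; auto. apply IHNorm.
    eapply Norm_weak; eauto. intros z [<-|Hz]; simpl; auto.
  - assert (HG1 : Forall good (M :: K :: G)) by (eapply good_ctx; eapply Norm_good; eauto).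
    apply Nb1 with M K; auto. apply gs_mk; auto. apply IHNorm.
    eapply Norm_weak; eauto. intros z [<-|Hz]; simpl; auto.
  - assert (HG1 : Forall good (Sign M K :: R :: G)) by (eapply good_ctx; eapply Norm_good; eauto).
    apply Nb2 with M R K; auto. apply gs_mk; auto. apply IHNorm.
    eapply Norm_weak; eauto. intros z [<-|Hz]; simpl; auto.
  - assert (HG1 : Forall good (A :: G)) by (eapply good_ctx; eapply Norm_good; eauto).
    assert (HN' : Norm (A :: G) T').
    { apply IHNorm. eapply Norm_weak; eauto. intros z [<-|Hz]; simpl; auto. }
    apply (MAIN HN'); auto. apply Ext_self; auto.
Qed.

Lemma case_eL G N M K : good N -> Forall good G -> In (Enc M K) G -> Norm G K -> Norm (M :: K :: G) N -> Norm G N.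
Proof.
  intros HT HG Hin HK HN. apply (LIFT HK); auto. { exists (Enc M K); split; simpl; auto. }
  intros G' Hi HG' HsK. apply NeL with M K; auto. apply gs_mk; auto.
  pose proof (good_ctx (Norm_good HN)) as HG2. inversion HG2; subst. inversion H2; subst.
  eapply Norm_weak; eauto. repeat apply incl_cons2; auto.
Qed.
Lemma case_b1 G N M K : good N -> Forall good G -> In (Blind M K) G -> Norm G K -> Norm (M :: K :: G) N -> Norm G N.
Proof.
  intros HT HG Hin HK HN. apply (LIFT HK); auto. { exists (Blind M K); split; simpl; auto. }
  intros G' Hi HG' HsK. apply Nb1 with M K; auto. apply gs_mk; auto.
  pose proof (good_ctx (Norm_good HN)) as HG2. inversion HG2; subst. inversion H2; subst.
  eapply Norm_weak; eauto. repeat apply incl_cons2; auto.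
Qed.
Lemma case_b2 G N M R K : good N -> Forall good G -> In (Sign (Blind M R) K) G -> Norm G R ->
  Norm (Sign M K :: R :: G) N -> Norm G N.
Proof.
  intros HT HG Hin HK HN. apply (LIFT HK); auto. { exists (Sign (Blind M R) K); split; simpl; auto. }
  intros G' Hi HG' HsK. apply Nb2 with M R K; auto. apply gs_mk; auto.
  pose proof (good_ctx (Norm_good HN)) as HG2. inversion HG2; subst. inversion H2; subst.
  eapply Norm_weak; eauto. repeat apply incl_cons2; auto.
Qed.
Lemma case_gs G M A : good M -> Forall good G -> (exists B, In B (M :: G) /\ subterm A B) -> guarded A ->
  Norm G A -> Norm (A :: G) M -> Norm G M.
Proof.
  intros HT HG (B&HB&HAB) HgA HA HN. apply (LIFT HA); auto. { exists B; split; auto. }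
  intros G' Hi HG' HsA. apply Ngs with (A := A); auto.
  - apply gs_mk; auto.
  - exists B; split; auto. destruct HB as [HB|HB]; simpl; auto.
  - pose proof (good_ctx (Norm_good HN)) as HG2. inversion HG2; subst.
    eapply Norm_weak; eauto. apply incl_cons2; auto.
Qed.

Lemma valid_norm d : valid th d -> Norm (fst (concl d)) (snd (concl d)).
Proof.
  induction d as [r G T|r G T d1 IH1|r G T d1 IH1 d2 IH2]; simpl.
  - intros (Hg&->&Hid). apply Nsyn, Sid; auto.
  - intros (Hg&Hv1&Hs). specialize (IH1 Hv1). destruct (concl d1) as [G1 T1]; simpl in *.
    inversion Hs; subst.
    + eapply NpL; eauto.
    + eapply NsL; eauto.
  - intros (Hg&Hv1&Hv2&Hs). specialize (IH1 Hv1). specialize (IH2 Hv2).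
    destruct (concl d1) as [G1 T1]; destruct (concl d2) as [G2 T2]; simpl in *.
    apply gs_split in Hg. destruct Hg as [HT HG].
    inversion Hs; subst.
    + eapply CUT; eauto.
    + apply RIGHT_pair; auto.
    + eapply case_eL; eauto.
    + apply RIGHT_enc; auto.
    + apply RIGHT_sign; auto.
    + eapply case_b1; eauto.
    + apply RIGHT_blind; auto.
    + eapply case_b2; eauto.
    + eapply case_gs; eauto.
Qed.


Definition synshape (d : deriv S) := all_nodes (fun n => root_rule n = Rid \/ is_right (root_rule n)) d.

Lemma all_nodes_impl (P Q : deriv S -> Prop) d : (forall n, P n -> Q n) -> all_nodes P d -> all_nodes Q d.
Proof. intro H. induction d; simpl; intuition. Qed.

Lemma some_none (P Q : deriv S -> Prop) d : all_nodes P d -> (forall n, P n -> ~ Q n) -> ~ some_node Q d.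
Proof. intros H1 H2. induction d; simpl in *; firstorder. Qed.

Lemma shape_root d : synshape d -> root_rule d = Rid \/ is_right (root_rule d).
Proof. unfold synshape; destruct d; simpl; tauto. Qed.

Lemma shape_normal d : synshape d -> normal d.
Proof.
  intro H. split; [|split].
  - eapply all_nodes_impl; [|exact H]. intros n [Hn|Hn]; rewrite ?Hn; try discriminate.
    destruct (root_rule n); simpl in *; try discriminate; tauto.
  - unfold no_left_above_right. unfold synshape in H.
    assert (Hno : forall d0 : deriv S, all_nodes (fun n : deriv S => root_rule n = Rid \/ is_right (root_rule n)) d0 ->
                   ~ some_node (fun m : deriv S => is_left (root_rule m)) d0).
    { intros d0 Hd0. eapply some_none; [exact Hd0|]. intros n [Hn|Hn] Hl; [rewrite Hn in Hl; exact Hl|].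
      destruct (root_rule n); simpl in *; auto. }
    induction d; simpl in *.
    + split; auto; try (intros _ p []).
    + destruct H as [_ H]. split; auto; try (intros _ p [<-|[]]; auto).
    + destruct H as [_ [Ha Hb]]. split; [|split; auto]; try (intros _ p [<-|[<-|[]]]; auto).
  - eapply all_nodes_impl; [|exact H]. intros n [Hn|Hn] Hb; destruct n; simpl in *; subst; simpl in *; auto;
    destruct r; simpl in *; auto.
Qed.

Lemma syn_deriv G T : Syn G T -> exists d, valid th d /\ concl d = (G, T) /\ synshape d.
Proof.
  induction 1.
  1:{ exists (D0 Rid G T). simpl. repeat split; auto. }
  all: destruct IHSyn1 as (d1&V1&C1&S1); destruct IHSyn2 as (d2&V2&C2&S2).
  1: exists (D2 RpR G (Pair M N) d1 d2).
  2: exists (D2 ReR G (Enc M K) d1 d2).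
  3: exists (D2 RsignR G (Sign M K) d1 d2).
  4: exists (D2 RblindR G (Blind M K) d1 d2).
  all: simpl; rewrite C1, C2; simpl; repeat split; auto; try (constructor; fail); unfold synshape in *; simpl; auto.
  all: right; exact I.
Qed.

Lemma normal1 r G T (d1 : deriv S) : r <> Rcut -> ~ is_right r -> ~ is_branching_left r -> normal d1 -> normal (D1 r G T d1).
Proof.
  intros H1 H2 H3 (C&N&L). unfold normal, cut_free, no_left_above_right, left_premise_ok in *; simpl.
  repeat split; auto; intro; contradiction.
Qed.

Lemma normal2 r G T (d1 d2 : deriv S) : r <> Rcut -> ~ is_right r -> synshape d1 -> normal d2 -> normal (D2 r G T d1 d2).
Proof.
  intros H1 H2 H3 H4. pose proof (@shape_normal d1 H3) as (C1&N1&L1). destruct H4 as (C&N&L).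
  unfold normal, cut_free, no_left_above_right, left_premise_ok in *; simpl.
  repeat split; auto.
  all: try (intro; contradiction).
  intros _. destruct (@shape_root d1 H3) as [E|E]; rewrite ?E; simpl; auto.
    destruct (root_rule d1); simpl in *; auto.
Qed.

Lemma norm_deriv G T : Norm G T -> exists d, valid th d /\ concl d = (G, T) /\ normal d.
Proof.
  induction 1.
  - destruct (syn_deriv H) as (d&V&C&Sh). exists d; split; [|split]; auto. apply shape_normal; auto.
  - destruct IHNorm as (d1&V1&C1&N1). exists (D1 RpL G T d1). split; [|split; [reflexivity|]].
    + simpl; rewrite C1; simpl. split; [auto|split; [auto|]]. econstructor; eauto.
    + apply normal1; simpl; auto; discriminate.
  - destruct IHNorm as (d1&V1&C1&N1). exists (D1 RsignL G N d1). split; [|split; [reflexivity|]].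
    + simpl; rewrite C1; simpl. split; [auto|split; [auto|]]. econstructor; eauto.
    + apply normal1; simpl; auto; discriminate.
  - destruct IHNorm as (d2&V2&C2&N2). destruct (syn_deriv H1) as (d1&V1&C1&S1).
    exists (D2 ReL G N d1 d2). split; [|split; [reflexivity|]].
    + simpl; rewrite C1, C2; simpl. split; [auto|split; [auto|split; [auto|]]]. econstructor; eauto.
    + apply normal2; simpl; auto; discriminate.
  - destruct IHNorm as (d2&V2&C2&N2). destruct (syn_deriv H1) as (d1&V1&C1&S1).
    exists (D2 RblindL1 G N d1 d2). split; [|split; [reflexivity|]].
    + simpl; rewrite C1, C2; simpl. split; [auto|split; [auto|split; [auto|]]]. econstructor; eauto.
    + apply normal2; simpl; auto; discriminate.
  - destruct IHNorm as (d2&V2&C2&N2). destruct (syn_deriv H1) as (d1&V1&C1&S1).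
    exists (D2 RblindL2 G N d1 d2). split; [|split; [reflexivity|]].
    + simpl; rewrite C1, C2; simpl. split; [auto|split; [auto|split; [auto|]]]. econstructor; eauto.
    + apply normal2; simpl; auto; discriminate.
  - destruct IHNorm as (d2&V2&C2&N2). destruct (syn_deriv H2) as (d1&V1&C1&S1).
    exists (D2 Rgs G M d1 d2). split; [|split; [reflexivity|]].
    + simpl; rewrite C1, C2; simpl. split; [auto|split; [auto|split; [auto|]]]. econstructor; eauto.
    + apply normal2; simpl; auto; discriminate.
Qed.

End Main.

Unset Implicit Arguments.

Theorem proposition4 (S : Type) (th : eqtheory S) :
  admissible th ->
  forall (G : ctx S) (M : term S),
    derivable th G M ->
    exists d : deriv S, valid th d /\ normal d /\ concl d = (G, M).
Proof.
  intros Hadm G M (d&Hv&Hc).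
  pose proof (@valid_norm S th Hadm d Hv) as HN. rewrite Hc in HN. simpl in HN.
  destruct (norm_deriv Hadm HN) as (d'&V&C&N). exists d'; auto.
Qed.
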